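(* There exists a PBD$(124,\{3,4\})$ of dimension three.
   Context: For a positive integer $v$ and $K \subseteq \{2,3,4,\dots\}$, a pairwise balanced design PBD$(v,K)$ is a pair $(X,\mathcal{B})$ where $X$ is a $v$-set of points and $\mathcal{B}$ is a family of subsets of $X$ (blocks), each of size in $K$, such that any two distinct points of $X$ lie together in exactly one block. A flat (subdesign) is a pair $(Y,\mathcal{B}_Y)$ with $Y \subseteq X$ and $\mathcal{B}_Y = \{B \in \mathcal{B} : B \subseteq Y\}$ such that any two distinct points of $Y$ lie together in exactly one block of $\mathcal{B}_Y$; it is proper if $Y \ne X$. The dimension of the PBD is the maximum integer $d$ such that every set of $d$ points is contained in a proper flat. *)

(* Defs.v *)
From mathcomp Require Import all_boot.
Set Implicit Arguments. Unset Strict Implicit. Unset Printing Implicit Defensive.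

(* A design on the point set 'I_v (the v-set X) with block family
   [blocks : {set {set 'I_v}}]; K is given as a predicate on nat. *)

Definition is_PBD (v : nat) (K : pred nat) (blocks : {set {set 'I_v}}) : Prop :=
  (forall B, B \in blocks -> #|B| \in K) /\
  (forall x y : 'I_v, x != y ->
     #|[set B in blocks | (x \in B) && (y \in B)]| = 1).

Definition is_flat (v : nat) (blocks : {set {set 'I_v}}) (Y : {set 'I_v}) : Prop :=
  forall x y : 'I_v, x \in Y -> y \in Y -> x != y ->
    #|[set B in blocks | [&& B \subset Y, x \in B & y \in B]]| = 1.

Definition is_proper_flat (v : nat) (blocks : {set {set 'I_v}}) (Y : {set 'I_v}) : Prop :=
  is_flat blocks Y /\ Y != [set: 'I_v].

Definition all_sets_in_proper_flat (v : nat) (blocks : {set {set 'I_v}}) (d : nat) : Prop :=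
  forall S : {set 'I_v}, #|S| = d ->
    exists Y : {set 'I_v}, is_proper_flat blocks Y /\ S \subset Y.

(* Sets of d points exist only for d <= v, so the
   maximum is taken over d <= v (for d > v the condition is vacuous). *)
Definition has_dimension (v : nat) (blocks : {set {set 'I_v}}) (d : nat) : Prop :=
  d <= v /\ all_sets_in_proper_flat blocks d /\
  (forall d', d' <= v -> all_sets_in_proper_flat blocks d' -> d' <= d).

(* Main.v *)
Require Import Defs.
From mathcomp Require Import all_boot.
Set Implicit Arguments. Unset Strict Implicit. Unset Printing Implicit Defensive.

Definition L : seq (seq nat) := [:: [:: 120; 121; 122; 123];
 [:: 29; 57; 121];
 [:: 5; 6; 11; 121];
 [:: 0; 4; 7; 121];
 [:: 0; 11; 120];
 [:: 5; 7; 57; 120];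
 [:: 4; 6; 29; 120];
 [:: 6; 7; 123];
 [:: 4; 11; 57; 123];
 [:: 0; 5; 29; 123];
 [:: 4; 5; 122];
 [:: 0; 6; 57; 122];
 [:: 7; 11; 29; 122];
 [:: 1; 10; 121];
 [:: 9; 13; 14; 121];
 [:: 8; 12; 15; 121];
 [:: 8; 9; 120];
 [:: 1; 13; 15; 120];
 [:: 10; 12; 14; 120];
 [:: 14; 15; 123];
 [:: 1; 9; 12; 123];
 [:: 8; 10; 13; 123];
 [:: 12; 13; 122];
 [:: 1; 8; 14; 122];
 [:: 9; 10; 15; 122];
 [:: 18; 19; 121];
 [:: 17; 21; 22; 121];
 [:: 16; 20; 23; 121];
 [:: 16; 17; 120];
 [:: 19; 21; 23; 120];
 [:: 18; 20; 22; 120];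
 [:: 22; 23; 123];
 [:: 17; 19; 20; 123];
 [:: 16; 18; 21; 123];
 [:: 20; 21; 122];
 [:: 16; 19; 22; 122];
 [:: 17; 18; 23; 122];
 [:: 26; 27; 121];
 [:: 2; 25; 30; 121];
 [:: 24; 28; 31; 121];
 [:: 24; 25; 120];
 [:: 2; 27; 31; 120];
 [:: 26; 28; 30; 120];
 [:: 30; 31; 123];
 [:: 25; 27; 28; 123];
 [:: 2; 24; 26; 123];
 [:: 2; 28; 122];
 [:: 24; 27; 30; 122];
 [:: 25; 26; 31; 122];
 [:: 34; 35; 121];
 [:: 33; 37; 38; 121];
 [:: 32; 36; 39; 121];
 [:: 32; 33; 120];
 [:: 35; 37; 39; 120];
 [:: 34; 36; 38; 120];
 [:: 38; 39; 123];
 [:: 33; 35; 36; 123];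
 [:: 32; 34; 37; 123];
 [:: 36; 37; 122];
 [:: 32; 35; 38; 122];
 [:: 33; 34; 39; 122];
 [:: 42; 43; 121];
 [:: 41; 45; 46; 121];
 [:: 40; 44; 47; 121];
 [:: 40; 41; 120];
 [:: 43; 45; 47; 120];
 [:: 42; 44; 46; 120];
 [:: 46; 47; 123];
 [:: 41; 43; 44; 123];
 [:: 40; 42; 45; 123];
 [:: 44; 45; 122];
 [:: 40; 43; 46; 122];
 [:: 41; 42; 47; 122];
 [:: 50; 51; 121];
 [:: 49; 53; 54; 121];
 [:: 48; 52; 55; 121];
 [:: 48; 49; 120];
 [:: 51; 53; 55; 120];
 [:: 50; 52; 54; 120];
 [:: 54; 55; 123];
 [:: 49; 51; 52; 123];
 [:: 48; 50; 53; 123];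
 [:: 52; 53; 122];
 [:: 48; 51; 54; 122];
 [:: 49; 50; 55; 122];
 [:: 58; 59; 121];
 [:: 3; 61; 62; 121];
 [:: 56; 60; 63; 121];
 [:: 3; 56; 120];
 [:: 59; 61; 63; 120];
 [:: 58; 60; 62; 120];
 [:: 62; 63; 123];
 [:: 3; 59; 60; 123];
 [:: 56; 58; 61; 123];
 [:: 60; 61; 122];
 [:: 56; 59; 62; 122];
 [:: 3; 58; 63; 122];
 [:: 66; 67; 121];
 [:: 65; 69; 70; 121];
 [:: 64; 68; 71; 121];
 [:: 64; 65; 120];
 [:: 67; 69; 71; 120];
 [:: 66; 68; 70; 120];
 [:: 70; 71; 123];
 [:: 65; 67; 68; 123];
 [:: 64; 66; 69; 123];
 [:: 68; 69; 122];
 [:: 64; 67; 70; 122];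
 [:: 65; 66; 71; 122];
 [:: 74; 75; 121];
 [:: 73; 77; 78; 121];
 [:: 72; 76; 79; 121];
 [:: 72; 73; 120];
 [:: 75; 77; 79; 120];
 [:: 74; 76; 78; 120];
 [:: 78; 79; 123];
 [:: 73; 75; 76; 123];
 [:: 72; 74; 77; 123];
 [:: 76; 77; 122];
 [:: 72; 75; 78; 122];
 [:: 73; 74; 79; 122];
 [:: 82; 83; 121];
 [:: 81; 85; 86; 121];
 [:: 80; 84; 87; 121];
 [:: 80; 81; 120];
 [:: 83; 85; 87; 120];
 [:: 82; 84; 86; 120];
 [:: 86; 87; 123];
 [:: 81; 83; 84; 123];
 [:: 80; 82; 85; 123];
 [:: 84; 85; 122];
 [:: 80; 83; 86; 122];
 [:: 81; 82; 87; 122];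
 [:: 90; 91; 121];
 [:: 89; 93; 94; 121];
 [:: 88; 92; 95; 121];
 [:: 88; 89; 120];
 [:: 91; 93; 95; 120];
 [:: 90; 92; 94; 120];
 [:: 94; 95; 123];
 [:: 89; 91; 92; 123];
 [:: 88; 90; 93; 123];
 [:: 92; 93; 122];
 [:: 88; 91; 94; 122];
 [:: 89; 90; 95; 122];
 [:: 98; 99; 121];
 [:: 97; 101; 102; 121];
 [:: 96; 100; 103; 121];
 [:: 96; 97; 120];
 [:: 99; 101; 103; 120];
 [:: 98; 100; 102; 120];
 [:: 102; 103; 123];
 [:: 97; 99; 100; 123];
 [:: 96; 98; 101; 123];
 [:: 100; 101; 122];
 [:: 96; 99; 102; 122];
 [:: 97; 98; 103; 122];
 [:: 106; 107; 121];
 [:: 105; 109; 110; 121];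
 [:: 104; 108; 111; 121];
 [:: 104; 105; 120];
 [:: 107; 109; 111; 120];
 [:: 106; 108; 110; 120];
 [:: 110; 111; 123];
 [:: 105; 107; 108; 123];
 [:: 104; 106; 109; 123];
 [:: 108; 109; 122];
 [:: 104; 107; 110; 122];
 [:: 105; 106; 111; 122];
 [:: 114; 115; 121];
 [:: 113; 117; 118; 121];
 [:: 112; 116; 119; 121];
 [:: 112; 113; 120];
 [:: 115; 117; 119; 120];
 [:: 114; 116; 118; 120];
 [:: 118; 119; 123];
 [:: 113; 115; 116; 123];
 [:: 112; 114; 117; 123];
 [:: 116; 117; 122];
 [:: 112; 115; 118; 122];
 [:: 113; 114; 119; 122];
 [:: 0; 8; 16];
 [:: 0; 9; 17];
 [:: 0; 10; 18];
 [:: 0; 1; 19];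
 [:: 0; 12; 20];
 [:: 0; 13; 21];
 [:: 0; 14; 22];
 [:: 0; 15; 23];
 [:: 8; 11; 17];
 [:: 9; 11; 18];
 [:: 10; 11; 19];
 [:: 1; 11; 20];
 [:: 11; 12; 21];
 [:: 11; 13; 22];
 [:: 11; 14; 23];
 [:: 11; 15; 16];
 [:: 8; 18; 29];
 [:: 9; 19; 29];
 [:: 10; 20; 29];
 [:: 1; 21; 29];
 [:: 12; 22; 29];
 [:: 13; 23; 29];
 [:: 14; 16; 29];
 [:: 15; 17; 29];
 [:: 8; 19; 57];
 [:: 9; 20; 57];
 [:: 10; 21; 57];
 [:: 1; 22; 57];
 [:: 12; 23; 57];
 [:: 13; 16; 57];
 [:: 14; 17; 57];
 [:: 15; 18; 57];
 [:: 4; 8; 20];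
 [:: 4; 9; 21];
 [:: 4; 10; 22];
 [:: 1; 4; 23];
 [:: 4; 12; 16];
 [:: 4; 13; 17];
 [:: 4; 14; 18];
 [:: 4; 15; 19];
 [:: 5; 8; 21];
 [:: 5; 9; 22];
 [:: 5; 10; 23];
 [:: 1; 5; 16];
 [:: 5; 12; 17];
 [:: 5; 13; 18];
 [:: 5; 14; 19];
 [:: 5; 15; 20];
 [:: 6; 8; 22];
 [:: 6; 9; 23];
 [:: 6; 10; 16];
 [:: 1; 6; 17];
 [:: 6; 12; 18];
 [:: 6; 13; 19];
 [:: 6; 14; 20];
 [:: 6; 15; 21];
 [:: 7; 8; 23];
 [:: 7; 9; 16];
 [:: 7; 10; 17];
 [:: 1; 7; 18];
 [:: 7; 12; 19];
 [:: 7; 13; 20];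
 [:: 7; 14; 21];
 [:: 7; 15; 22];
 [:: 0; 24; 32];
 [:: 0; 25; 33];
 [:: 0; 26; 34];
 [:: 0; 27; 35];
 [:: 0; 28; 36];
 [:: 0; 2; 37];
 [:: 0; 30; 38];
 [:: 0; 31; 39];
 [:: 11; 24; 33];
 [:: 11; 25; 34];
 [:: 11; 26; 35];
 [:: 11; 27; 36];
 [:: 11; 28; 37];
 [:: 2; 11; 38];
 [:: 11; 30; 39];
 [:: 11; 31; 32];
 [:: 24; 29; 34];
 [:: 25; 29; 35];
 [:: 26; 29; 36];
 [:: 27; 29; 37];
 [:: 28; 29; 38];
 [:: 2; 29; 39];
 [:: 29; 30; 32];
 [:: 29; 31; 33];
 [:: 24; 35; 57];
 [:: 25; 36; 57];
 [:: 26; 37; 57];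
 [:: 27; 38; 57];
 [:: 28; 39; 57];
 [:: 2; 32; 57];
 [:: 30; 33; 57];
 [:: 31; 34; 57];
 [:: 4; 24; 36];
 [:: 4; 25; 37];
 [:: 4; 26; 38];
 [:: 4; 27; 39];
 [:: 4; 28; 32];
 [:: 2; 4; 33];
 [:: 4; 30; 34];
 [:: 4; 31; 35];
 [:: 5; 24; 37];
 [:: 5; 25; 38];
 [:: 5; 26; 39];
 [:: 5; 27; 32];
 [:: 5; 28; 33];
 [:: 2; 5; 34];
 [:: 5; 30; 35];
 [:: 5; 31; 36];
 [:: 6; 24; 38];
 [:: 6; 25; 39];
 [:: 6; 26; 32];
 [:: 6; 27; 33];
 [:: 6; 28; 34];
 [:: 2; 6; 35];
 [:: 6; 30; 36];
 [:: 6; 31; 37];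
 [:: 7; 24; 39];
 [:: 7; 25; 32];
 [:: 7; 26; 33];
 [:: 7; 27; 34];
 [:: 7; 28; 35];
 [:: 2; 7; 36];
 [:: 7; 30; 37];
 [:: 7; 31; 38];
 [:: 0; 40; 48];
 [:: 0; 41; 49];
 [:: 0; 42; 50];
 [:: 0; 43; 51];
 [:: 0; 44; 52];
 [:: 0; 45; 53];
 [:: 0; 46; 54];
 [:: 0; 47; 55];
 [:: 11; 40; 49];
 [:: 11; 41; 50];
 [:: 11; 42; 51];
 [:: 11; 43; 52];
 [:: 11; 44; 53];
 [:: 11; 45; 54];
 [:: 11; 46; 55];
 [:: 11; 47; 48];
 [:: 29; 40; 50];
 [:: 29; 41; 51];
 [:: 29; 42; 52];
 [:: 29; 43; 53];
 [:: 29; 44; 54];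
 [:: 29; 45; 55];
 [:: 29; 46; 48];
 [:: 29; 47; 49];
 [:: 40; 51; 57];
 [:: 41; 52; 57];
 [:: 42; 53; 57];
 [:: 43; 54; 57];
 [:: 44; 55; 57];
 [:: 45; 48; 57];
 [:: 46; 49; 57];
 [:: 47; 50; 57];
 [:: 4; 40; 52];
 [:: 4; 41; 53];
 [:: 4; 42; 54];
 [:: 4; 43; 55];
 [:: 4; 44; 48];
 [:: 4; 45; 49];
 [:: 4; 46; 50];
 [:: 4; 47; 51];
 [:: 5; 40; 53];
 [:: 5; 41; 54];
 [:: 5; 42; 55];
 [:: 5; 43; 48];
 [:: 5; 44; 49];
 [:: 5; 45; 50];
 [:: 5; 46; 51];
 [:: 5; 47; 52];
 [:: 6; 40; 54];
 [:: 6; 41; 55];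
 [:: 6; 42; 48];
 [:: 6; 43; 49];
 [:: 6; 44; 50];
 [:: 6; 45; 51];
 [:: 6; 46; 52];
 [:: 6; 47; 53];
 [:: 7; 40; 55];
 [:: 7; 41; 48];
 [:: 7; 42; 49];
 [:: 7; 43; 50];
 [:: 7; 44; 51];
 [:: 7; 45; 52];
 [:: 7; 46; 53];
 [:: 7; 47; 54];
 [:: 0; 56; 64];
 [:: 0; 3; 65];
 [:: 0; 58; 66];
 [:: 0; 59; 67];
 [:: 0; 60; 68];
 [:: 0; 61; 69];
 [:: 0; 62; 70];
 [:: 0; 63; 71];
 [:: 11; 56; 65];
 [:: 3; 11; 66];
 [:: 11; 58; 67];
 [:: 11; 59; 68];
 [:: 11; 60; 69];
 [:: 11; 61; 70];
 [:: 11; 62; 71];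
 [:: 11; 63; 64];
 [:: 29; 56; 66];
 [:: 3; 29; 67];
 [:: 29; 58; 68];
 [:: 29; 59; 69];
 [:: 29; 60; 70];
 [:: 29; 61; 71];
 [:: 29; 62; 64];
 [:: 29; 63; 65];
 [:: 56; 57; 67];
 [:: 3; 57; 68];
 [:: 57; 58; 69];
 [:: 57; 59; 70];
 [:: 57; 60; 71];
 [:: 57; 61; 64];
 [:: 57; 62; 65];
 [:: 57; 63; 66];
 [:: 4; 56; 68];
 [:: 3; 4; 69];
 [:: 4; 58; 70];
 [:: 4; 59; 71];
 [:: 4; 60; 64];
 [:: 4; 61; 65];
 [:: 4; 62; 66];
 [:: 4; 63; 67];
 [:: 5; 56; 69];
 [:: 3; 5; 70];
 [:: 5; 58; 71];
 [:: 5; 59; 64];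
 [:: 5; 60; 65];
 [:: 5; 61; 66];
 [:: 5; 62; 67];
 [:: 5; 63; 68];
 [:: 6; 56; 70];
 [:: 3; 6; 71];
 [:: 6; 58; 64];
 [:: 6; 59; 65];
 [:: 6; 60; 66];
 [:: 6; 61; 67];
 [:: 6; 62; 68];
 [:: 6; 63; 69];
 [:: 7; 56; 71];
 [:: 3; 7; 64];
 [:: 7; 58; 65];
 [:: 7; 59; 66];
 [:: 7; 60; 67];
 [:: 7; 61; 68];
 [:: 7; 62; 69];
 [:: 7; 63; 70];
 [:: 0; 72; 80];
 [:: 0; 73; 81];
 [:: 0; 74; 82];
 [:: 0; 75; 83];
 [:: 0; 76; 84];
 [:: 0; 77; 85];
 [:: 0; 78; 86];
 [:: 0; 79; 87];
 [:: 11; 72; 81];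
 [:: 11; 73; 82];
 [:: 11; 74; 83];
 [:: 11; 75; 84];
 [:: 11; 76; 85];
 [:: 11; 77; 86];
 [:: 11; 78; 87];
 [:: 11; 79; 80];
 [:: 29; 72; 82];
 [:: 29; 73; 83];
 [:: 29; 74; 84];
 [:: 29; 75; 85];
 [:: 29; 76; 86];
 [:: 29; 77; 87];
 [:: 29; 78; 80];
 [:: 29; 79; 81];
 [:: 57; 72; 83];
 [:: 57; 73; 84];
 [:: 57; 74; 85];
 [:: 57; 75; 86];
 [:: 57; 76; 87];
 [:: 57; 77; 80];
 [:: 57; 78; 81];
 [:: 57; 79; 82];
 [:: 4; 72; 84];
 [:: 4; 73; 85];
 [:: 4; 74; 86];
 [:: 4; 75; 87];
 [:: 4; 76; 80];
 [:: 4; 77; 81];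
 [:: 4; 78; 82];
 [:: 4; 79; 83];
 [:: 5; 72; 85];
 [:: 5; 73; 86];
 [:: 5; 74; 87];
 [:: 5; 75; 80];
 [:: 5; 76; 81];
 [:: 5; 77; 82];
 [:: 5; 78; 83];
 [:: 5; 79; 84];
 [:: 6; 72; 86];
 [:: 6; 73; 87];
 [:: 6; 74; 80];
 [:: 6; 75; 81];
 [:: 6; 76; 82];
 [:: 6; 77; 83];
 [:: 6; 78; 84];
 [:: 6; 79; 85];
 [:: 7; 72; 87];
 [:: 7; 73; 80];
 [:: 7; 74; 81];
 [:: 7; 75; 82];
 [:: 7; 76; 83];
 [:: 7; 77; 84];
 [:: 7; 78; 85];
 [:: 7; 79; 86];
 [:: 0; 88; 96];
 [:: 0; 89; 97];
 [:: 0; 90; 98];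
 [:: 0; 91; 99];
 [:: 0; 92; 100];
 [:: 0; 93; 101];
 [:: 0; 94; 102];
 [:: 0; 95; 103];
 [:: 11; 88; 97];
 [:: 11; 89; 98];
 [:: 11; 90; 99];
 [:: 11; 91; 100];
 [:: 11; 92; 101];
 [:: 11; 93; 102];
 [:: 11; 94; 103];
 [:: 11; 95; 96];
 [:: 29; 88; 98];
 [:: 29; 89; 99];
 [:: 29; 90; 100];
 [:: 29; 91; 101];
 [:: 29; 92; 102];
 [:: 29; 93; 103];
 [:: 29; 94; 96];
 [:: 29; 95; 97];
 [:: 57; 88; 99];
 [:: 57; 89; 100];
 [:: 57; 90; 101];
 [:: 57; 91; 102];
 [:: 57; 92; 103];
 [:: 57; 93; 96];
 [:: 57; 94; 97];
 [:: 57; 95; 98];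
 [:: 4; 88; 100];
 [:: 4; 89; 101];
 [:: 4; 90; 102];
 [:: 4; 91; 103];
 [:: 4; 92; 96];
 [:: 4; 93; 97];
 [:: 4; 94; 98];
 [:: 4; 95; 99];
 [:: 5; 88; 101];
 [:: 5; 89; 102];
 [:: 5; 90; 103];
 [:: 5; 91; 96];
 [:: 5; 92; 97];
 [:: 5; 93; 98];
 [:: 5; 94; 99];
 [:: 5; 95; 100];
 [:: 6; 88; 102];
 [:: 6; 89; 103];
 [:: 6; 90; 96];
 [:: 6; 91; 97];
 [:: 6; 92; 98];
 [:: 6; 93; 99];
 [:: 6; 94; 100];
 [:: 6; 95; 101];
 [:: 7; 88; 103];
 [:: 7; 89; 96];
 [:: 7; 90; 97];
 [:: 7; 91; 98];
 [:: 7; 92; 99];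
 [:: 7; 93; 100];
 [:: 7; 94; 101];
 [:: 7; 95; 102];
 [:: 0; 104; 112];
 [:: 0; 105; 113];
 [:: 0; 106; 114];
 [:: 0; 107; 115];
 [:: 0; 108; 116];
 [:: 0; 109; 117];
 [:: 0; 110; 118];
 [:: 0; 111; 119];
 [:: 11; 104; 113];
 [:: 11; 105; 114];
 [:: 11; 106; 115];
 [:: 11; 107; 116];
 [:: 11; 108; 117];
 [:: 11; 109; 118];
 [:: 11; 110; 119];
 [:: 11; 111; 112];
 [:: 29; 104; 114];
 [:: 29; 105; 115];
 [:: 29; 106; 116];
 [:: 29; 107; 117];
 [:: 29; 108; 118];
 [:: 29; 109; 119];
 [:: 29; 110; 112];
 [:: 29; 111; 113];
 [:: 57; 104; 115];
 [:: 57; 105; 116];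
 [:: 57; 106; 117];
 [:: 57; 107; 118];
 [:: 57; 108; 119];
 [:: 57; 109; 112];
 [:: 57; 110; 113];
 [:: 57; 111; 114];
 [:: 4; 104; 116];
 [:: 4; 105; 117];
 [:: 4; 106; 118];
 [:: 4; 107; 119];
 [:: 4; 108; 112];
 [:: 4; 109; 113];
 [:: 4; 110; 114];
 [:: 4; 111; 115];
 [:: 5; 104; 117];
 [:: 5; 105; 118];
 [:: 5; 106; 119];
 [:: 5; 107; 112];
 [:: 5; 108; 113];
 [:: 5; 109; 114];
 [:: 5; 110; 115];
 [:: 5; 111; 116];
 [:: 6; 104; 118];
 [:: 6; 105; 119];
 [:: 6; 106; 112];
 [:: 6; 107; 113];
 [:: 6; 108; 114];
 [:: 6; 109; 115];
 [:: 6; 110; 116];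
 [:: 6; 111; 117];
 [:: 7; 104; 119];
 [:: 7; 105; 112];
 [:: 7; 106; 113];
 [:: 7; 107; 114];
 [:: 7; 108; 115];
 [:: 7; 109; 116];
 [:: 7; 110; 117];
 [:: 7; 111; 118];
 [:: 8; 24; 40];
 [:: 8; 25; 41];
 [:: 8; 26; 42];
 [:: 8; 27; 43];
 [:: 8; 28; 44];
 [:: 2; 8; 45];
 [:: 8; 30; 46];
 [:: 8; 31; 47];
 [:: 9; 24; 41];
 [:: 9; 25; 42];
 [:: 9; 26; 43];
 [:: 9; 27; 44];
 [:: 9; 28; 45];
 [:: 2; 9; 46];
 [:: 9; 30; 47];
 [:: 9; 31; 40];
 [:: 10; 24; 42];
 [:: 10; 25; 43];
 [:: 10; 26; 44];
 [:: 10; 27; 45];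
 [:: 10; 28; 46];
 [:: 2; 10; 47];
 [:: 10; 30; 40];
 [:: 10; 31; 41];
 [:: 1; 24; 43];
 [:: 1; 25; 44];
 [:: 1; 26; 45];
 [:: 1; 27; 46];
 [:: 1; 28; 47];
 [:: 1; 2; 40];
 [:: 1; 30; 41];
 [:: 1; 31; 42];
 [:: 12; 24; 44];
 [:: 12; 25; 45];
 [:: 12; 26; 46];
 [:: 12; 27; 47];
 [:: 12; 28; 40];
 [:: 2; 12; 41];
 [:: 12; 30; 42];
 [:: 12; 31; 43];
 [:: 13; 24; 45];
 [:: 13; 25; 46];
 [:: 13; 26; 47];
 [:: 13; 27; 40];
 [:: 13; 28; 41];
 [:: 2; 13; 42];
 [:: 13; 30; 43];
 [:: 13; 31; 44];
 [:: 14; 24; 46];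
 [:: 14; 25; 47];
 [:: 14; 26; 40];
 [:: 14; 27; 41];
 [:: 14; 28; 42];
 [:: 2; 14; 43];
 [:: 14; 30; 44];
 [:: 14; 31; 45];
 [:: 15; 24; 47];
 [:: 15; 25; 40];
 [:: 15; 26; 41];
 [:: 15; 27; 42];
 [:: 15; 28; 43];
 [:: 2; 15; 44];
 [:: 15; 30; 45];
 [:: 15; 31; 46];
 [:: 8; 32; 48];
 [:: 8; 33; 49];
 [:: 8; 34; 50];
 [:: 8; 35; 51];
 [:: 8; 36; 52];
 [:: 8; 37; 53];
 [:: 8; 38; 54];
 [:: 8; 39; 55];
 [:: 9; 32; 49];
 [:: 9; 33; 50];
 [:: 9; 34; 51];
 [:: 9; 35; 52];
 [:: 9; 36; 53];
 [:: 9; 37; 54];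
 [:: 9; 38; 55];
 [:: 9; 39; 48];
 [:: 10; 32; 50];
 [:: 10; 33; 51];
 [:: 10; 34; 52];
 [:: 10; 35; 53];
 [:: 10; 36; 54];
 [:: 10; 37; 55];
 [:: 10; 38; 48];
 [:: 10; 39; 49];
 [:: 1; 32; 51];
 [:: 1; 33; 52];
 [:: 1; 34; 53];
 [:: 1; 35; 54];
 [:: 1; 36; 55];
 [:: 1; 37; 48];
 [:: 1; 38; 49];
 [:: 1; 39; 50];
 [:: 12; 32; 52];
 [:: 12; 33; 53];
 [:: 12; 34; 54];
 [:: 12; 35; 55];
 [:: 12; 36; 48];
 [:: 12; 37; 49];
 [:: 12; 38; 50];
 [:: 12; 39; 51];
 [:: 13; 32; 53];
 [:: 13; 33; 54];
 [:: 13; 34; 55];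
 [:: 13; 35; 48];
 [:: 13; 36; 49];
 [:: 13; 37; 50];
 [:: 13; 38; 51];
 [:: 13; 39; 52];
 [:: 14; 32; 54];
 [:: 14; 33; 55];
 [:: 14; 34; 48];
 [:: 14; 35; 49];
 [:: 14; 36; 50];
 [:: 14; 37; 51];
 [:: 14; 38; 52];
 [:: 14; 39; 53];
 [:: 15; 32; 55];
 [:: 15; 33; 48];
 [:: 15; 34; 49];
 [:: 15; 35; 50];
 [:: 15; 36; 51];
 [:: 15; 37; 52];
 [:: 15; 38; 53];
 [:: 15; 39; 54];
 [:: 8; 56; 72];
 [:: 3; 8; 73];
 [:: 8; 58; 74];
 [:: 8; 59; 75];
 [:: 8; 60; 76];
 [:: 8; 61; 77];
 [:: 8; 62; 78];
 [:: 8; 63; 79];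
 [:: 9; 56; 73];
 [:: 3; 9; 74];
 [:: 9; 58; 75];
 [:: 9; 59; 76];
 [:: 9; 60; 77];
 [:: 9; 61; 78];
 [:: 9; 62; 79];
 [:: 9; 63; 72];
 [:: 10; 56; 74];
 [:: 3; 10; 75];
 [:: 10; 58; 76];
 [:: 10; 59; 77];
 [:: 10; 60; 78];
 [:: 10; 61; 79];
 [:: 10; 62; 72];
 [:: 10; 63; 73];
 [:: 1; 56; 75];
 [:: 1; 3; 76];
 [:: 1; 58; 77];
 [:: 1; 59; 78];
 [:: 1; 60; 79];
 [:: 1; 61; 72];
 [:: 1; 62; 73];
 [:: 1; 63; 74];
 [:: 12; 56; 76];
 [:: 3; 12; 77];
 [:: 12; 58; 78];
 [:: 12; 59; 79];
 [:: 12; 60; 72];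
 [:: 12; 61; 73];
 [:: 12; 62; 74];
 [:: 12; 63; 75];
 [:: 13; 56; 77];
 [:: 3; 13; 78];
 [:: 13; 58; 79];
 [:: 13; 59; 72];
 [:: 13; 60; 73];
 [:: 13; 61; 74];
 [:: 13; 62; 75];
 [:: 13; 63; 76];
 [:: 14; 56; 78];
 [:: 3; 14; 79];
 [:: 14; 58; 72];
 [:: 14; 59; 73];
 [:: 14; 60; 74];
 [:: 14; 61; 75];
 [:: 14; 62; 76];
 [:: 14; 63; 77];
 [:: 15; 56; 79];
 [:: 3; 15; 72];
 [:: 15; 58; 73];
 [:: 15; 59; 74];
 [:: 15; 60; 75];
 [:: 15; 61; 76];
 [:: 15; 62; 77];
 [:: 15; 63; 78];
 [:: 8; 64; 80];
 [:: 8; 65; 81];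
 [:: 8; 66; 82];
 [:: 8; 67; 83];
 [:: 8; 68; 84];
 [:: 8; 69; 85];
 [:: 8; 70; 86];
 [:: 8; 71; 87];
 [:: 9; 64; 81];
 [:: 9; 65; 82];
 [:: 9; 66; 83];
 [:: 9; 67; 84];
 [:: 9; 68; 85];
 [:: 9; 69; 86];
 [:: 9; 70; 87];
 [:: 9; 71; 80];
 [:: 10; 64; 82];
 [:: 10; 65; 83];
 [:: 10; 66; 84];
 [:: 10; 67; 85];
 [:: 10; 68; 86];
 [:: 10; 69; 87];
 [:: 10; 70; 80];
 [:: 10; 71; 81];
 [:: 1; 64; 83];
 [:: 1; 65; 84];
 [:: 1; 66; 85];
 [:: 1; 67; 86];
 [:: 1; 68; 87];
 [:: 1; 69; 80];
 [:: 1; 70; 81];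
 [:: 1; 71; 82];
 [:: 12; 64; 84];
 [:: 12; 65; 85];
 [:: 12; 66; 86];
 [:: 12; 67; 87];
 [:: 12; 68; 80];
 [:: 12; 69; 81];
 [:: 12; 70; 82];
 [:: 12; 71; 83];
 [:: 13; 64; 85];
 [:: 13; 65; 86];
 [:: 13; 66; 87];
 [:: 13; 67; 80];
 [:: 13; 68; 81];
 [:: 13; 69; 82];
 [:: 13; 70; 83];
 [:: 13; 71; 84];
 [:: 14; 64; 86];
 [:: 14; 65; 87];
 [:: 14; 66; 80];
 [:: 14; 67; 81];
 [:: 14; 68; 82];
 [:: 14; 69; 83];
 [:: 14; 70; 84];
 [:: 14; 71; 85];
 [:: 15; 64; 87];
 [:: 15; 65; 80];
 [:: 15; 66; 81];
 [:: 15; 67; 82];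
 [:: 15; 68; 83];
 [:: 15; 69; 84];
 [:: 15; 70; 85];
 [:: 15; 71; 86];
 [:: 8; 88; 104];
 [:: 8; 89; 105];
 [:: 8; 90; 106];
 [:: 8; 91; 107];
 [:: 8; 92; 108];
 [:: 8; 93; 109];
 [:: 8; 94; 110];
 [:: 8; 95; 111];
 [:: 9; 88; 105];
 [:: 9; 89; 106];
 [:: 9; 90; 107];
 [:: 9; 91; 108];
 [:: 9; 92; 109];
 [:: 9; 93; 110];
 [:: 9; 94; 111];
 [:: 9; 95; 104];
 [:: 10; 88; 106];
 [:: 10; 89; 107];
 [:: 10; 90; 108];
 [:: 10; 91; 109];
 [:: 10; 92; 110];
 [:: 10; 93; 111];
 [:: 10; 94; 104];
 [:: 10; 95; 105];
 [:: 1; 88; 107];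
 [:: 1; 89; 108];
 [:: 1; 90; 109];
 [:: 1; 91; 110];
 [:: 1; 92; 111];
 [:: 1; 93; 104];
 [:: 1; 94; 105];
 [:: 1; 95; 106];
 [:: 12; 88; 108];
 [:: 12; 89; 109];
 [:: 12; 90; 110];
 [:: 12; 91; 111];
 [:: 12; 92; 104];
 [:: 12; 93; 105];
 [:: 12; 94; 106];
 [:: 12; 95; 107];
 [:: 13; 88; 109];
 [:: 13; 89; 110];
 [:: 13; 90; 111];
 [:: 13; 91; 104];
 [:: 13; 92; 105];
 [:: 13; 93; 106];
 [:: 13; 94; 107];
 [:: 13; 95; 108];
 [:: 14; 88; 110];
 [:: 14; 89; 111];
 [:: 14; 90; 104];
 [:: 14; 91; 105];
 [:: 14; 92; 106];
 [:: 14; 93; 107];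
 [:: 14; 94; 108];
 [:: 14; 95; 109];
 [:: 15; 88; 111];
 [:: 15; 89; 104];
 [:: 15; 90; 105];
 [:: 15; 91; 106];
 [:: 15; 92; 107];
 [:: 15; 93; 108];
 [:: 15; 94; 109];
 [:: 15; 95; 110];
 [:: 8; 96; 112];
 [:: 8; 97; 113];
 [:: 8; 98; 114];
 [:: 8; 99; 115];
 [:: 8; 100; 116];
 [:: 8; 101; 117];
 [:: 8; 102; 118];
 [:: 8; 103; 119];
 [:: 9; 96; 113];
 [:: 9; 97; 114];
 [:: 9; 98; 115];
 [:: 9; 99; 116];
 [:: 9; 100; 117];
 [:: 9; 101; 118];
 [:: 9; 102; 119];
 [:: 9; 103; 112];
 [:: 10; 96; 114];
 [:: 10; 97; 115];
 [:: 10; 98; 116];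
 [:: 10; 99; 117];
 [:: 10; 100; 118];
 [:: 10; 101; 119];
 [:: 10; 102; 112];
 [:: 10; 103; 113];
 [:: 1; 96; 115];
 [:: 1; 97; 116];
 [:: 1; 98; 117];
 [:: 1; 99; 118];
 [:: 1; 100; 119];
 [:: 1; 101; 112];
 [:: 1; 102; 113];
 [:: 1; 103; 114];
 [:: 12; 96; 116];
 [:: 12; 97; 117];
 [:: 12; 98; 118];
 [:: 12; 99; 119];
 [:: 12; 100; 112];
 [:: 12; 101; 113];
 [:: 12; 102; 114];
 [:: 12; 103; 115];
 [:: 13; 96; 117];
 [:: 13; 97; 118];
 [:: 13; 98; 119];
 [:: 13; 99; 112];
 [:: 13; 100; 113];
 [:: 13; 101; 114];
 [:: 13; 102; 115];
 [:: 13; 103; 116];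
 [:: 14; 96; 118];
 [:: 14; 97; 119];
 [:: 14; 98; 112];
 [:: 14; 99; 113];
 [:: 14; 100; 114];
 [:: 14; 101; 115];
 [:: 14; 102; 116];
 [:: 14; 103; 117];
 [:: 15; 96; 119];
 [:: 15; 97; 112];
 [:: 15; 98; 113];
 [:: 15; 99; 114];
 [:: 15; 100; 115];
 [:: 15; 101; 116];
 [:: 15; 102; 117];
 [:: 15; 103; 118];
 [:: 16; 24; 48];
 [:: 16; 25; 49];
 [:: 16; 26; 50];
 [:: 16; 27; 51];
 [:: 16; 28; 52];
 [:: 2; 16; 53];
 [:: 16; 30; 54];
 [:: 16; 31; 55];
 [:: 17; 24; 49];
 [:: 17; 25; 50];
 [:: 17; 26; 51];
 [:: 17; 27; 52];
 [:: 17; 28; 53];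
 [:: 2; 17; 54];
 [:: 17; 30; 55];
 [:: 17; 31; 48];
 [:: 18; 24; 50];
 [:: 18; 25; 51];
 [:: 18; 26; 52];
 [:: 18; 27; 53];
 [:: 18; 28; 54];
 [:: 2; 18; 55];
 [:: 18; 30; 48];
 [:: 18; 31; 49];
 [:: 19; 24; 51];
 [:: 19; 25; 52];
 [:: 19; 26; 53];
 [:: 19; 27; 54];
 [:: 19; 28; 55];
 [:: 2; 19; 48];
 [:: 19; 30; 49];
 [:: 19; 31; 50];
 [:: 20; 24; 52];
 [:: 20; 25; 53];
 [:: 20; 26; 54];
 [:: 20; 27; 55];
 [:: 20; 28; 48];
 [:: 2; 20; 49];
 [:: 20; 30; 50];
 [:: 20; 31; 51];
 [:: 21; 24; 53];
 [:: 21; 25; 54];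
 [:: 21; 26; 55];
 [:: 21; 27; 48];
 [:: 21; 28; 49];
 [:: 2; 21; 50];
 [:: 21; 30; 51];
 [:: 21; 31; 52];
 [:: 22; 24; 54];
 [:: 22; 25; 55];
 [:: 22; 26; 48];
 [:: 22; 27; 49];
 [:: 22; 28; 50];
 [:: 2; 22; 51];
 [:: 22; 30; 52];
 [:: 22; 31; 53];
 [:: 23; 24; 55];
 [:: 23; 25; 48];
 [:: 23; 26; 49];
 [:: 23; 27; 50];
 [:: 23; 28; 51];
 [:: 2; 23; 52];
 [:: 23; 30; 53];
 [:: 23; 31; 54];
 [:: 16; 32; 40];
 [:: 16; 33; 41];
 [:: 16; 34; 42];
 [:: 16; 35; 43];
 [:: 16; 36; 44];
 [:: 16; 37; 45];
 [:: 16; 38; 46];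
 [:: 16; 39; 47];
 [:: 17; 32; 41];
 [:: 17; 33; 42];
 [:: 17; 34; 43];
 [:: 17; 35; 44];
 [:: 17; 36; 45];
 [:: 17; 37; 46];
 [:: 17; 38; 47];
 [:: 17; 39; 40];
 [:: 18; 32; 42];
 [:: 18; 33; 43];
 [:: 18; 34; 44];
 [:: 18; 35; 45];
 [:: 18; 36; 46];
 [:: 18; 37; 47];
 [:: 18; 38; 40];
 [:: 18; 39; 41];
 [:: 19; 32; 43];
 [:: 19; 33; 44];
 [:: 19; 34; 45];
 [:: 19; 35; 46];
 [:: 19; 36; 47];
 [:: 19; 37; 40];
 [:: 19; 38; 41];
 [:: 19; 39; 42];
 [:: 20; 32; 44];
 [:: 20; 33; 45];
 [:: 20; 34; 46];
 [:: 20; 35; 47];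
 [:: 20; 36; 40];
 [:: 20; 37; 41];
 [:: 20; 38; 42];
 [:: 20; 39; 43];
 [:: 21; 32; 45];
 [:: 21; 33; 46];
 [:: 21; 34; 47];
 [:: 21; 35; 40];
 [:: 21; 36; 41];
 [:: 21; 37; 42];
 [:: 21; 38; 43];
 [:: 21; 39; 44];
 [:: 22; 32; 46];
 [:: 22; 33; 47];
 [:: 22; 34; 40];
 [:: 22; 35; 41];
 [:: 22; 36; 42];
 [:: 22; 37; 43];
 [:: 22; 38; 44];
 [:: 22; 39; 45];
 [:: 23; 32; 47];
 [:: 23; 33; 40];
 [:: 23; 34; 41];
 [:: 23; 35; 42];
 [:: 23; 36; 43];
 [:: 23; 37; 44];
 [:: 23; 38; 45];
 [:: 23; 39; 46];
 [:: 16; 56; 80];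
 [:: 3; 16; 81];
 [:: 16; 58; 82];
 [:: 16; 59; 83];
 [:: 16; 60; 84];
 [:: 16; 61; 85];
 [:: 16; 62; 86];
 [:: 16; 63; 87];
 [:: 17; 56; 81];
 [:: 3; 17; 82];
 [:: 17; 58; 83];
 [:: 17; 59; 84];
 [:: 17; 60; 85];
 [:: 17; 61; 86];
 [:: 17; 62; 87];
 [:: 17; 63; 80];
 [:: 18; 56; 82];
 [:: 3; 18; 83];
 [:: 18; 58; 84];
 [:: 18; 59; 85];
 [:: 18; 60; 86];
 [:: 18; 61; 87];
 [:: 18; 62; 80];
 [:: 18; 63; 81];
 [:: 19; 56; 83];
 [:: 3; 19; 84];
 [:: 19; 58; 85];
 [:: 19; 59; 86];
 [:: 19; 60; 87];
 [:: 19; 61; 80];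
 [:: 19; 62; 81];
 [:: 19; 63; 82];
 [:: 20; 56; 84];
 [:: 3; 20; 85];
 [:: 20; 58; 86];
 [:: 20; 59; 87];
 [:: 20; 60; 80];
 [:: 20; 61; 81];
 [:: 20; 62; 82];
 [:: 20; 63; 83];
 [:: 21; 56; 85];
 [:: 3; 21; 86];
 [:: 21; 58; 87];
 [:: 21; 59; 80];
 [:: 21; 60; 81];
 [:: 21; 61; 82];
 [:: 21; 62; 83];
 [:: 21; 63; 84];
 [:: 22; 56; 86];
 [:: 3; 22; 87];
 [:: 22; 58; 80];
 [:: 22; 59; 81];
 [:: 22; 60; 82];
 [:: 22; 61; 83];
 [:: 22; 62; 84];
 [:: 22; 63; 85];
 [:: 23; 56; 87];
 [:: 3; 23; 80];
 [:: 23; 58; 81];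
 [:: 23; 59; 82];
 [:: 23; 60; 83];
 [:: 23; 61; 84];
 [:: 23; 62; 85];
 [:: 23; 63; 86];
 [:: 16; 64; 72];
 [:: 16; 65; 73];
 [:: 16; 66; 74];
 [:: 16; 67; 75];
 [:: 16; 68; 76];
 [:: 16; 69; 77];
 [:: 16; 70; 78];
 [:: 16; 71; 79];
 [:: 17; 64; 73];
 [:: 17; 65; 74];
 [:: 17; 66; 75];
 [:: 17; 67; 76];
 [:: 17; 68; 77];
 [:: 17; 69; 78];
 [:: 17; 70; 79];
 [:: 17; 71; 72];
 [:: 18; 64; 74];
 [:: 18; 65; 75];
 [:: 18; 66; 76];
 [:: 18; 67; 77];
 [:: 18; 68; 78];
 [:: 18; 69; 79];
 [:: 18; 70; 72];
 [:: 18; 71; 73];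
 [:: 19; 64; 75];
 [:: 19; 65; 76];
 [:: 19; 66; 77];
 [:: 19; 67; 78];
 [:: 19; 68; 79];
 [:: 19; 69; 72];
 [:: 19; 70; 73];
 [:: 19; 71; 74];
 [:: 20; 64; 76];
 [:: 20; 65; 77];
 [:: 20; 66; 78];
 [:: 20; 67; 79];
 [:: 20; 68; 72];
 [:: 20; 69; 73];
 [:: 20; 70; 74];
 [:: 20; 71; 75];
 [:: 21; 64; 77];
 [:: 21; 65; 78];
 [:: 21; 66; 79];
 [:: 21; 67; 72];
 [:: 21; 68; 73];
 [:: 21; 69; 74];
 [:: 21; 70; 75];
 [:: 21; 71; 76];
 [:: 22; 64; 78];
 [:: 22; 65; 79];
 [:: 22; 66; 72];
 [:: 22; 67; 73];
 [:: 22; 68; 74];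
 [:: 22; 69; 75];
 [:: 22; 70; 76];
 [:: 22; 71; 77];
 [:: 23; 64; 79];
 [:: 23; 65; 72];
 [:: 23; 66; 73];
 [:: 23; 67; 74];
 [:: 23; 68; 75];
 [:: 23; 69; 76];
 [:: 23; 70; 77];
 [:: 23; 71; 78];
 [:: 16; 88; 112];
 [:: 16; 89; 113];
 [:: 16; 90; 114];
 [:: 16; 91; 115];
 [:: 16; 92; 116];
 [:: 16; 93; 117];
 [:: 16; 94; 118];
 [:: 16; 95; 119];
 [:: 17; 88; 113];
 [:: 17; 89; 114];
 [:: 17; 90; 115];
 [:: 17; 91; 116];
 [:: 17; 92; 117];
 [:: 17; 93; 118];
 [:: 17; 94; 119];
 [:: 17; 95; 112];
 [:: 18; 88; 114];
 [:: 18; 89; 115];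
 [:: 18; 90; 116];
 [:: 18; 91; 117];
 [:: 18; 92; 118];
 [:: 18; 93; 119];
 [:: 18; 94; 112];
 [:: 18; 95; 113];
 [:: 19; 88; 115];
 [:: 19; 89; 116];
 [:: 19; 90; 117];
 [:: 19; 91; 118];
 [:: 19; 92; 119];
 [:: 19; 93; 112];
 [:: 19; 94; 113];
 [:: 19; 95; 114];
 [:: 20; 88; 116];
 [:: 20; 89; 117];
 [:: 20; 90; 118];
 [:: 20; 91; 119];
 [:: 20; 92; 112];
 [:: 20; 93; 113];
 [:: 20; 94; 114];
 [:: 20; 95; 115];
 [:: 21; 88; 117];
 [:: 21; 89; 118];
 [:: 21; 90; 119];
 [:: 21; 91; 112];
 [:: 21; 92; 113];
 [:: 21; 93; 114];
 [:: 21; 94; 115];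
 [:: 21; 95; 116];
 [:: 22; 88; 118];
 [:: 22; 89; 119];
 [:: 22; 90; 112];
 [:: 22; 91; 113];
 [:: 22; 92; 114];
 [:: 22; 93; 115];
 [:: 22; 94; 116];
 [:: 22; 95; 117];
 [:: 23; 88; 119];
 [:: 23; 89; 112];
 [:: 23; 90; 113];
 [:: 23; 91; 114];
 [:: 23; 92; 115];
 [:: 23; 93; 116];
 [:: 23; 94; 117];
 [:: 23; 95; 118];
 [:: 16; 96; 104];
 [:: 16; 97; 105];
 [:: 16; 98; 106];
 [:: 16; 99; 107];
 [:: 16; 100; 108];
 [:: 16; 101; 109];
 [:: 16; 102; 110];
 [:: 16; 103; 111];
 [:: 17; 96; 105];
 [:: 17; 97; 106];
 [:: 17; 98; 107];
 [:: 17; 99; 108];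
 [:: 17; 100; 109];
 [:: 17; 101; 110];
 [:: 17; 102; 111];
 [:: 17; 103; 104];
 [:: 18; 96; 106];
 [:: 18; 97; 107];
 [:: 18; 98; 108];
 [:: 18; 99; 109];
 [:: 18; 100; 110];
 [:: 18; 101; 111];
 [:: 18; 102; 104];
 [:: 18; 103; 105];
 [:: 19; 96; 107];
 [:: 19; 97; 108];
 [:: 19; 98; 109];
 [:: 19; 99; 110];
 [:: 19; 100; 111];
 [:: 19; 101; 104];
 [:: 19; 102; 105];
 [:: 19; 103; 106];
 [:: 20; 96; 108];
 [:: 20; 97; 109];
 [:: 20; 98; 110];
 [:: 20; 99; 111];
 [:: 20; 100; 104];
 [:: 20; 101; 105];
 [:: 20; 102; 106];
 [:: 20; 103; 107];
 [:: 21; 96; 109];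
 [:: 21; 97; 110];
 [:: 21; 98; 111];
 [:: 21; 99; 104];
 [:: 21; 100; 105];
 [:: 21; 101; 106];
 [:: 21; 102; 107];
 [:: 21; 103; 108];
 [:: 22; 96; 110];
 [:: 22; 97; 111];
 [:: 22; 98; 104];
 [:: 22; 99; 105];
 [:: 22; 100; 106];
 [:: 22; 101; 107];
 [:: 22; 102; 108];
 [:: 22; 103; 109];
 [:: 23; 96; 111];
 [:: 23; 97; 104];
 [:: 23; 98; 105];
 [:: 23; 99; 106];
 [:: 23; 100; 107];
 [:: 23; 101; 108];
 [:: 23; 102; 109];
 [:: 23; 103; 110];
 [:: 24; 56; 88];
 [:: 3; 24; 89];
 [:: 24; 58; 90];
 [:: 24; 59; 91];
 [:: 24; 60; 92];
 [:: 24; 61; 93];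
 [:: 24; 62; 94];
 [:: 24; 63; 95];
 [:: 25; 56; 89];
 [:: 3; 25; 90];
 [:: 25; 58; 91];
 [:: 25; 59; 92];
 [:: 25; 60; 93];
 [:: 25; 61; 94];
 [:: 25; 62; 95];
 [:: 25; 63; 88];
 [:: 26; 56; 90];
 [:: 3; 26; 91];
 [:: 26; 58; 92];
 [:: 26; 59; 93];
 [:: 26; 60; 94];
 [:: 26; 61; 95];
 [:: 26; 62; 88];
 [:: 26; 63; 89];
 [:: 27; 56; 91];
 [:: 3; 27; 92];
 [:: 27; 58; 93];
 [:: 27; 59; 94];
 [:: 27; 60; 95];
 [:: 27; 61; 88];
 [:: 27; 62; 89];
 [:: 27; 63; 90];
 [:: 28; 56; 92];
 [:: 3; 28; 93];
 [:: 28; 58; 94];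
 [:: 28; 59; 95];
 [:: 28; 60; 88];
 [:: 28; 61; 89];
 [:: 28; 62; 90];
 [:: 28; 63; 91];
 [:: 2; 56; 93];
 [:: 2; 3; 94];
 [:: 2; 58; 95];
 [:: 2; 59; 88];
 [:: 2; 60; 89];
 [:: 2; 61; 90];
 [:: 2; 62; 91];
 [:: 2; 63; 92];
 [:: 30; 56; 94];
 [:: 3; 30; 95];
 [:: 30; 58; 88];
 [:: 30; 59; 89];
 [:: 30; 60; 90];
 [:: 30; 61; 91];
 [:: 30; 62; 92];
 [:: 30; 63; 93];
 [:: 31; 56; 95];
 [:: 3; 31; 88];
 [:: 31; 58; 89];
 [:: 31; 59; 90];
 [:: 31; 60; 91];
 [:: 31; 61; 92];
 [:: 31; 62; 93];
 [:: 31; 63; 94];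
 [:: 24; 64; 96];
 [:: 24; 65; 97];
 [:: 24; 66; 98];
 [:: 24; 67; 99];
 [:: 24; 68; 100];
 [:: 24; 69; 101];
 [:: 24; 70; 102];
 [:: 24; 71; 103];
 [:: 25; 64; 97];
 [:: 25; 65; 98];
 [:: 25; 66; 99];
 [:: 25; 67; 100];
 [:: 25; 68; 101];
 [:: 25; 69; 102];
 [:: 25; 70; 103];
 [:: 25; 71; 96];
 [:: 26; 64; 98];
 [:: 26; 65; 99];
 [:: 26; 66; 100];
 [:: 26; 67; 101];
 [:: 26; 68; 102];
 [:: 26; 69; 103];
 [:: 26; 70; 96];
 [:: 26; 71; 97];
 [:: 27; 64; 99];
 [:: 27; 65; 100];
 [:: 27; 66; 101];
 [:: 27; 67; 102];
 [:: 27; 68; 103];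
 [:: 27; 69; 96];
 [:: 27; 70; 97];
 [:: 27; 71; 98];
 [:: 28; 64; 100];
 [:: 28; 65; 101];
 [:: 28; 66; 102];
 [:: 28; 67; 103];
 [:: 28; 68; 96];
 [:: 28; 69; 97];
 [:: 28; 70; 98];
 [:: 28; 71; 99];
 [:: 2; 64; 101];
 [:: 2; 65; 102];
 [:: 2; 66; 103];
 [:: 2; 67; 96];
 [:: 2; 68; 97];
 [:: 2; 69; 98];
 [:: 2; 70; 99];
 [:: 2; 71; 100];
 [:: 30; 64; 102];
 [:: 30; 65; 103];
 [:: 30; 66; 96];
 [:: 30; 67; 97];
 [:: 30; 68; 98];
 [:: 30; 69; 99];
 [:: 30; 70; 100];
 [:: 30; 71; 101];
 [:: 31; 64; 103];
 [:: 31; 65; 96];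
 [:: 31; 66; 97];
 [:: 31; 67; 98];
 [:: 31; 68; 99];
 [:: 31; 69; 100];
 [:: 31; 70; 101];
 [:: 31; 71; 102];
 [:: 24; 72; 104];
 [:: 24; 73; 105];
 [:: 24; 74; 106];
 [:: 24; 75; 107];
 [:: 24; 76; 108];
 [:: 24; 77; 109];
 [:: 24; 78; 110];
 [:: 24; 79; 111];
 [:: 25; 72; 105];
 [:: 25; 73; 106];
 [:: 25; 74; 107];
 [:: 25; 75; 108];
 [:: 25; 76; 109];
 [:: 25; 77; 110];
 [:: 25; 78; 111];
 [:: 25; 79; 104];
 [:: 26; 72; 106];
 [:: 26; 73; 107];
 [:: 26; 74; 108];
 [:: 26; 75; 109];
 [:: 26; 76; 110];
 [:: 26; 77; 111];
 [:: 26; 78; 104];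
 [:: 26; 79; 105];
 [:: 27; 72; 107];
 [:: 27; 73; 108];
 [:: 27; 74; 109];
 [:: 27; 75; 110];
 [:: 27; 76; 111];
 [:: 27; 77; 104];
 [:: 27; 78; 105];
 [:: 27; 79; 106];
 [:: 28; 72; 108];
 [:: 28; 73; 109];
 [:: 28; 74; 110];
 [:: 28; 75; 111];
 [:: 28; 76; 104];
 [:: 28; 77; 105];
 [:: 28; 78; 106];
 [:: 28; 79; 107];
 [:: 2; 72; 109];
 [:: 2; 73; 110];
 [:: 2; 74; 111];
 [:: 2; 75; 104];
 [:: 2; 76; 105];
 [:: 2; 77; 106];
 [:: 2; 78; 107];
 [:: 2; 79; 108];
 [:: 30; 72; 110];
 [:: 30; 73; 111];
 [:: 30; 74; 104];
 [:: 30; 75; 105];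
 [:: 30; 76; 106];
 [:: 30; 77; 107];
 [:: 30; 78; 108];
 [:: 30; 79; 109];
 [:: 31; 72; 111];
 [:: 31; 73; 104];
 [:: 31; 74; 105];
 [:: 31; 75; 106];
 [:: 31; 76; 107];
 [:: 31; 77; 108];
 [:: 31; 78; 109];
 [:: 31; 79; 110];
 [:: 24; 80; 112];
 [:: 24; 81; 113];
 [:: 24; 82; 114];
 [:: 24; 83; 115];
 [:: 24; 84; 116];
 [:: 24; 85; 117];
 [:: 24; 86; 118];
 [:: 24; 87; 119];
 [:: 25; 80; 113];
 [:: 25; 81; 114];
 [:: 25; 82; 115];
 [:: 25; 83; 116];
 [:: 25; 84; 117];
 [:: 25; 85; 118];
 [:: 25; 86; 119];
 [:: 25; 87; 112];
 [:: 26; 80; 114];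
 [:: 26; 81; 115];
 [:: 26; 82; 116];
 [:: 26; 83; 117];
 [:: 26; 84; 118];
 [:: 26; 85; 119];
 [:: 26; 86; 112];
 [:: 26; 87; 113];
 [:: 27; 80; 115];
 [:: 27; 81; 116];
 [:: 27; 82; 117];
 [:: 27; 83; 118];
 [:: 27; 84; 119];
 [:: 27; 85; 112];
 [:: 27; 86; 113];
 [:: 27; 87; 114];
 [:: 28; 80; 116];
 [:: 28; 81; 117];
 [:: 28; 82; 118];
 [:: 28; 83; 119];
 [:: 28; 84; 112];
 [:: 28; 85; 113];
 [:: 28; 86; 114];
 [:: 28; 87; 115];
 [:: 2; 80; 117];
 [:: 2; 81; 118];
 [:: 2; 82; 119];
 [:: 2; 83; 112];
 [:: 2; 84; 113];
 [:: 2; 85; 114];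
 [:: 2; 86; 115];
 [:: 2; 87; 116];
 [:: 30; 80; 118];
 [:: 30; 81; 119];
 [:: 30; 82; 112];
 [:: 30; 83; 113];
 [:: 30; 84; 114];
 [:: 30; 85; 115];
 [:: 30; 86; 116];
 [:: 30; 87; 117];
 [:: 31; 80; 119];
 [:: 31; 81; 112];
 [:: 31; 82; 113];
 [:: 31; 83; 114];
 [:: 31; 84; 115];
 [:: 31; 85; 116];
 [:: 31; 86; 117];
 [:: 31; 87; 118];
 [:: 32; 56; 96];
 [:: 3; 32; 97];
 [:: 32; 58; 98];
 [:: 32; 59; 99];
 [:: 32; 60; 100];
 [:: 32; 61; 101];
 [:: 32; 62; 102];
 [:: 32; 63; 103];
 [:: 33; 56; 97];
 [:: 3; 33; 98];
 [:: 33; 58; 99];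
 [:: 33; 59; 100];
 [:: 33; 60; 101];
 [:: 33; 61; 102];
 [:: 33; 62; 103];
 [:: 33; 63; 96];
 [:: 34; 56; 98];
 [:: 3; 34; 99];
 [:: 34; 58; 100];
 [:: 34; 59; 101];
 [:: 34; 60; 102];
 [:: 34; 61; 103];
 [:: 34; 62; 96];
 [:: 34; 63; 97];
 [:: 35; 56; 99];
 [:: 3; 35; 100];
 [:: 35; 58; 101];
 [:: 35; 59; 102];
 [:: 35; 60; 103];
 [:: 35; 61; 96];
 [:: 35; 62; 97];
 [:: 35; 63; 98];
 [:: 36; 56; 100];
 [:: 3; 36; 101];
 [:: 36; 58; 102];
 [:: 36; 59; 103];
 [:: 36; 60; 96];
 [:: 36; 61; 97];
 [:: 36; 62; 98];
 [:: 36; 63; 99];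
 [:: 37; 56; 101];
 [:: 3; 37; 102];
 [:: 37; 58; 103];
 [:: 37; 59; 96];
 [:: 37; 60; 97];
 [:: 37; 61; 98];
 [:: 37; 62; 99];
 [:: 37; 63; 100];
 [:: 38; 56; 102];
 [:: 3; 38; 103];
 [:: 38; 58; 96];
 [:: 38; 59; 97];
 [:: 38; 60; 98];
 [:: 38; 61; 99];
 [:: 38; 62; 100];
 [:: 38; 63; 101];
 [:: 39; 56; 103];
 [:: 3; 39; 96];
 [:: 39; 58; 97];
 [:: 39; 59; 98];
 [:: 39; 60; 99];
 [:: 39; 61; 100];
 [:: 39; 62; 101];
 [:: 39; 63; 102];
 [:: 32; 64; 88];
 [:: 32; 65; 89];
 [:: 32; 66; 90];
 [:: 32; 67; 91];
 [:: 32; 68; 92];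
 [:: 32; 69; 93];
 [:: 32; 70; 94];
 [:: 32; 71; 95];
 [:: 33; 64; 89];
 [:: 33; 65; 90];
 [:: 33; 66; 91];
 [:: 33; 67; 92];
 [:: 33; 68; 93];
 [:: 33; 69; 94];
 [:: 33; 70; 95];
 [:: 33; 71; 88];
 [:: 34; 64; 90];
 [:: 34; 65; 91];
 [:: 34; 66; 92];
 [:: 34; 67; 93];
 [:: 34; 68; 94];
 [:: 34; 69; 95];
 [:: 34; 70; 88];
 [:: 34; 71; 89];
 [:: 35; 64; 91];
 [:: 35; 65; 92];
 [:: 35; 66; 93];
 [:: 35; 67; 94];
 [:: 35; 68; 95];
 [:: 35; 69; 88];
 [:: 35; 70; 89];
 [:: 35; 71; 90];
 [:: 36; 64; 92];
 [:: 36; 65; 93];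
 [:: 36; 66; 94];
 [:: 36; 67; 95];
 [:: 36; 68; 88];
 [:: 36; 69; 89];
 [:: 36; 70; 90];
 [:: 36; 71; 91];
 [:: 37; 64; 93];
 [:: 37; 65; 94];
 [:: 37; 66; 95];
 [:: 37; 67; 88];
 [:: 37; 68; 89];
 [:: 37; 69; 90];
 [:: 37; 70; 91];
 [:: 37; 71; 92];
 [:: 38; 64; 94];
 [:: 38; 65; 95];
 [:: 38; 66; 88];
 [:: 38; 67; 89];
 [:: 38; 68; 90];
 [:: 38; 69; 91];
 [:: 38; 70; 92];
 [:: 38; 71; 93];
 [:: 39; 64; 95];
 [:: 39; 65; 88];
 [:: 39; 66; 89];
 [:: 39; 67; 90];
 [:: 39; 68; 91];
 [:: 39; 69; 92];
 [:: 39; 70; 93];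
 [:: 39; 71; 94];
 [:: 32; 72; 112];
 [:: 32; 73; 113];
 [:: 32; 74; 114];
 [:: 32; 75; 115];
 [:: 32; 76; 116];
 [:: 32; 77; 117];
 [:: 32; 78; 118];
 [:: 32; 79; 119];
 [:: 33; 72; 113];
 [:: 33; 73; 114];
 [:: 33; 74; 115];
 [:: 33; 75; 116];
 [:: 33; 76; 117];
 [:: 33; 77; 118];
 [:: 33; 78; 119];
 [:: 33; 79; 112];
 [:: 34; 72; 114];
 [:: 34; 73; 115];
 [:: 34; 74; 116];
 [:: 34; 75; 117];
 [:: 34; 76; 118];
 [:: 34; 77; 119];
 [:: 34; 78; 112];
 [:: 34; 79; 113];
 [:: 35; 72; 115];
 [:: 35; 73; 116];
 [:: 35; 74; 117];
 [:: 35; 75; 118];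
 [:: 35; 76; 119];
 [:: 35; 77; 112];
 [:: 35; 78; 113];
 [:: 35; 79; 114];
 [:: 36; 72; 116];
 [:: 36; 73; 117];
 [:: 36; 74; 118];
 [:: 36; 75; 119];
 [:: 36; 76; 112];
 [:: 36; 77; 113];
 [:: 36; 78; 114];
 [:: 36; 79; 115];
 [:: 37; 72; 117];
 [:: 37; 73; 118];
 [:: 37; 74; 119];
 [:: 37; 75; 112];
 [:: 37; 76; 113];
 [:: 37; 77; 114];
 [:: 37; 78; 115];
 [:: 37; 79; 116];
 [:: 38; 72; 118];
 [:: 38; 73; 119];
 [:: 38; 74; 112];
 [:: 38; 75; 113];
 [:: 38; 76; 114];
 [:: 38; 77; 115];
 [:: 38; 78; 116];
 [:: 38; 79; 117];
 [:: 39; 72; 119];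
 [:: 39; 73; 112];
 [:: 39; 74; 113];
 [:: 39; 75; 114];
 [:: 39; 76; 115];
 [:: 39; 77; 116];
 [:: 39; 78; 117];
 [:: 39; 79; 118];
 [:: 32; 80; 104];
 [:: 32; 81; 105];
 [:: 32; 82; 106];
 [:: 32; 83; 107];
 [:: 32; 84; 108];
 [:: 32; 85; 109];
 [:: 32; 86; 110];
 [:: 32; 87; 111];
 [:: 33; 80; 105];
 [:: 33; 81; 106];
 [:: 33; 82; 107];
 [:: 33; 83; 108];
 [:: 33; 84; 109];
 [:: 33; 85; 110];
 [:: 33; 86; 111];
 [:: 33; 87; 104];
 [:: 34; 80; 106];
 [:: 34; 81; 107];
 [:: 34; 82; 108];
 [:: 34; 83; 109];
 [:: 34; 84; 110];
 [:: 34; 85; 111];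
 [:: 34; 86; 104];
 [:: 34; 87; 105];
 [:: 35; 80; 107];
 [:: 35; 81; 108];
 [:: 35; 82; 109];
 [:: 35; 83; 110];
 [:: 35; 84; 111];
 [:: 35; 85; 104];
 [:: 35; 86; 105];
 [:: 35; 87; 106];
 [:: 36; 80; 108];
 [:: 36; 81; 109];
 [:: 36; 82; 110];
 [:: 36; 83; 111];
 [:: 36; 84; 104];
 [:: 36; 85; 105];
 [:: 36; 86; 106];
 [:: 36; 87; 107];
 [:: 37; 80; 109];
 [:: 37; 81; 110];
 [:: 37; 82; 111];
 [:: 37; 83; 104];
 [:: 37; 84; 105];
 [:: 37; 85; 106];
 [:: 37; 86; 107];
 [:: 37; 87; 108];
 [:: 38; 80; 110];
 [:: 38; 81; 111];
 [:: 38; 82; 104];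
 [:: 38; 83; 105];
 [:: 38; 84; 106];
 [:: 38; 85; 107];
 [:: 38; 86; 108];
 [:: 38; 87; 109];
 [:: 39; 80; 111];
 [:: 39; 81; 104];
 [:: 39; 82; 105];
 [:: 39; 83; 106];
 [:: 39; 84; 107];
 [:: 39; 85; 108];
 [:: 39; 86; 109];
 [:: 39; 87; 110];
 [:: 40; 56; 104];
 [:: 3; 40; 105];
 [:: 40; 58; 106];
 [:: 40; 59; 107];
 [:: 40; 60; 108];
 [:: 40; 61; 109];
 [:: 40; 62; 110];
 [:: 40; 63; 111];
 [:: 41; 56; 105];
 [:: 3; 41; 106];
 [:: 41; 58; 107];
 [:: 41; 59; 108];
 [:: 41; 60; 109];
 [:: 41; 61; 110];
 [:: 41; 62; 111];
 [:: 41; 63; 104];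
 [:: 42; 56; 106];
 [:: 3; 42; 107];
 [:: 42; 58; 108];
 [:: 42; 59; 109];
 [:: 42; 60; 110];
 [:: 42; 61; 111];
 [:: 42; 62; 104];
 [:: 42; 63; 105];
 [:: 43; 56; 107];
 [:: 3; 43; 108];
 [:: 43; 58; 109];
 [:: 43; 59; 110];
 [:: 43; 60; 111];
 [:: 43; 61; 104];
 [:: 43; 62; 105];
 [:: 43; 63; 106];
 [:: 44; 56; 108];
 [:: 3; 44; 109];
 [:: 44; 58; 110];
 [:: 44; 59; 111];
 [:: 44; 60; 104];
 [:: 44; 61; 105];
 [:: 44; 62; 106];
 [:: 44; 63; 107];
 [:: 45; 56; 109];
 [:: 3; 45; 110];
 [:: 45; 58; 111];
 [:: 45; 59; 104];
 [:: 45; 60; 105];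
 [:: 45; 61; 106];
 [:: 45; 62; 107];
 [:: 45; 63; 108];
 [:: 46; 56; 110];
 [:: 3; 46; 111];
 [:: 46; 58; 104];
 [:: 46; 59; 105];
 [:: 46; 60; 106];
 [:: 46; 61; 107];
 [:: 46; 62; 108];
 [:: 46; 63; 109];
 [:: 47; 56; 111];
 [:: 3; 47; 104];
 [:: 47; 58; 105];
 [:: 47; 59; 106];
 [:: 47; 60; 107];
 [:: 47; 61; 108];
 [:: 47; 62; 109];
 [:: 47; 63; 110];
 [:: 40; 64; 112];
 [:: 40; 65; 113];
 [:: 40; 66; 114];
 [:: 40; 67; 115];
 [:: 40; 68; 116];
 [:: 40; 69; 117];
 [:: 40; 70; 118];
 [:: 40; 71; 119];
 [:: 41; 64; 113];
 [:: 41; 65; 114];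
 [:: 41; 66; 115];
 [:: 41; 67; 116];
 [:: 41; 68; 117];
 [:: 41; 69; 118];
 [:: 41; 70; 119];
 [:: 41; 71; 112];
 [:: 42; 64; 114];
 [:: 42; 65; 115];
 [:: 42; 66; 116];
 [:: 42; 67; 117];
 [:: 42; 68; 118];
 [:: 42; 69; 119];
 [:: 42; 70; 112];
 [:: 42; 71; 113];
 [:: 43; 64; 115];
 [:: 43; 65; 116];
 [:: 43; 66; 117];
 [:: 43; 67; 118];
 [:: 43; 68; 119];
 [:: 43; 69; 112];
 [:: 43; 70; 113];
 [:: 43; 71; 114];
 [:: 44; 64; 116];
 [:: 44; 65; 117];
 [:: 44; 66; 118];
 [:: 44; 67; 119];
 [:: 44; 68; 112];
 [:: 44; 69; 113];
 [:: 44; 70; 114];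
 [:: 44; 71; 115];
 [:: 45; 64; 117];
 [:: 45; 65; 118];
 [:: 45; 66; 119];
 [:: 45; 67; 112];
 [:: 45; 68; 113];
 [:: 45; 69; 114];
 [:: 45; 70; 115];
 [:: 45; 71; 116];
 [:: 46; 64; 118];
 [:: 46; 65; 119];
 [:: 46; 66; 112];
 [:: 46; 67; 113];
 [:: 46; 68; 114];
 [:: 46; 69; 115];
 [:: 46; 70; 116];
 [:: 46; 71; 117];
 [:: 47; 64; 119];
 [:: 47; 65; 112];
 [:: 47; 66; 113];
 [:: 47; 67; 114];
 [:: 47; 68; 115];
 [:: 47; 69; 116];
 [:: 47; 70; 117];
 [:: 47; 71; 118];
 [:: 40; 72; 88];
 [:: 40; 73; 89];
 [:: 40; 74; 90];
 [:: 40; 75; 91];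
 [:: 40; 76; 92];
 [:: 40; 77; 93];
 [:: 40; 78; 94];
 [:: 40; 79; 95];
 [:: 41; 72; 89];
 [:: 41; 73; 90];
 [:: 41; 74; 91];
 [:: 41; 75; 92];
 [:: 41; 76; 93];
 [:: 41; 77; 94];
 [:: 41; 78; 95];
 [:: 41; 79; 88];
 [:: 42; 72; 90];
 [:: 42; 73; 91];
 [:: 42; 74; 92];
 [:: 42; 75; 93];
 [:: 42; 76; 94];
 [:: 42; 77; 95];
 [:: 42; 78; 88];
 [:: 42; 79; 89];
 [:: 43; 72; 91];
 [:: 43; 73; 92];
 [:: 43; 74; 93];
 [:: 43; 75; 94];
 [:: 43; 76; 95];
 [:: 43; 77; 88];
 [:: 43; 78; 89];
 [:: 43; 79; 90];
 [:: 44; 72; 92];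
 [:: 44; 73; 93];
 [:: 44; 74; 94];
 [:: 44; 75; 95];
 [:: 44; 76; 88];
 [:: 44; 77; 89];
 [:: 44; 78; 90];
 [:: 44; 79; 91];
 [:: 45; 72; 93];
 [:: 45; 73; 94];
 [:: 45; 74; 95];
 [:: 45; 75; 88];
 [:: 45; 76; 89];
 [:: 45; 77; 90];
 [:: 45; 78; 91];
 [:: 45; 79; 92];
 [:: 46; 72; 94];
 [:: 46; 73; 95];
 [:: 46; 74; 88];
 [:: 46; 75; 89];
 [:: 46; 76; 90];
 [:: 46; 77; 91];
 [:: 46; 78; 92];
 [:: 46; 79; 93];
 [:: 47; 72; 95];
 [:: 47; 73; 88];
 [:: 47; 74; 89];
 [:: 47; 75; 90];
 [:: 47; 76; 91];
 [:: 47; 77; 92];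
 [:: 47; 78; 93];
 [:: 47; 79; 94];
 [:: 40; 80; 96];
 [:: 40; 81; 97];
 [:: 40; 82; 98];
 [:: 40; 83; 99];
 [:: 40; 84; 100];
 [:: 40; 85; 101];
 [:: 40; 86; 102];
 [:: 40; 87; 103];
 [:: 41; 80; 97];
 [:: 41; 81; 98];
 [:: 41; 82; 99];
 [:: 41; 83; 100];
 [:: 41; 84; 101];
 [:: 41; 85; 102];
 [:: 41; 86; 103];
 [:: 41; 87; 96];
 [:: 42; 80; 98];
 [:: 42; 81; 99];
 [:: 42; 82; 100];
 [:: 42; 83; 101];
 [:: 42; 84; 102];
 [:: 42; 85; 103];
 [:: 42; 86; 96];
 [:: 42; 87; 97];
 [:: 43; 80; 99];
 [:: 43; 81; 100];
 [:: 43; 82; 101];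
 [:: 43; 83; 102];
 [:: 43; 84; 103];
 [:: 43; 85; 96];
 [:: 43; 86; 97];
 [:: 43; 87; 98];
 [:: 44; 80; 100];
 [:: 44; 81; 101];
 [:: 44; 82; 102];
 [:: 44; 83; 103];
 [:: 44; 84; 96];
 [:: 44; 85; 97];
 [:: 44; 86; 98];
 [:: 44; 87; 99];
 [:: 45; 80; 101];
 [:: 45; 81; 102];
 [:: 45; 82; 103];
 [:: 45; 83; 96];
 [:: 45; 84; 97];
 [:: 45; 85; 98];
 [:: 45; 86; 99];
 [:: 45; 87; 100];
 [:: 46; 80; 102];
 [:: 46; 81; 103];
 [:: 46; 82; 96];
 [:: 46; 83; 97];
 [:: 46; 84; 98];
 [:: 46; 85; 99];
 [:: 46; 86; 100];
 [:: 46; 87; 101];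
 [:: 47; 80; 103];
 [:: 47; 81; 96];
 [:: 47; 82; 97];
 [:: 47; 83; 98];
 [:: 47; 84; 99];
 [:: 47; 85; 100];
 [:: 47; 86; 101];
 [:: 47; 87; 102];
 [:: 48; 56; 112];
 [:: 3; 48; 113];
 [:: 48; 58; 114];
 [:: 48; 59; 115];
 [:: 48; 60; 116];
 [:: 48; 61; 117];
 [:: 48; 62; 118];
 [:: 48; 63; 119];
 [:: 49; 56; 113];
 [:: 3; 49; 114];
 [:: 49; 58; 115];
 [:: 49; 59; 116];
 [:: 49; 60; 117];
 [:: 49; 61; 118];
 [:: 49; 62; 119];
 [:: 49; 63; 112];
 [:: 50; 56; 114];
 [:: 3; 50; 115];
 [:: 50; 58; 116];
 [:: 50; 59; 117];
 [:: 50; 60; 118];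
 [:: 50; 61; 119];
 [:: 50; 62; 112];
 [:: 50; 63; 113];
 [:: 51; 56; 115];
 [:: 3; 51; 116];
 [:: 51; 58; 117];
 [:: 51; 59; 118];
 [:: 51; 60; 119];
 [:: 51; 61; 112];
 [:: 51; 62; 113];
 [:: 51; 63; 114];
 [:: 52; 56; 116];
 [:: 3; 52; 117];
 [:: 52; 58; 118];
 [:: 52; 59; 119];
 [:: 52; 60; 112];
 [:: 52; 61; 113];
 [:: 52; 62; 114];
 [:: 52; 63; 115];
 [:: 53; 56; 117];
 [:: 3; 53; 118];
 [:: 53; 58; 119];
 [:: 53; 59; 112];
 [:: 53; 60; 113];
 [:: 53; 61; 114];
 [:: 53; 62; 115];
 [:: 53; 63; 116];
 [:: 54; 56; 118];
 [:: 3; 54; 119];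
 [:: 54; 58; 112];
 [:: 54; 59; 113];
 [:: 54; 60; 114];
 [:: 54; 61; 115];
 [:: 54; 62; 116];
 [:: 54; 63; 117];
 [:: 55; 56; 119];
 [:: 3; 55; 112];
 [:: 55; 58; 113];
 [:: 55; 59; 114];
 [:: 55; 60; 115];
 [:: 55; 61; 116];
 [:: 55; 62; 117];
 [:: 55; 63; 118];
 [:: 48; 64; 104];
 [:: 48; 65; 105];
 [:: 48; 66; 106];
 [:: 48; 67; 107];
 [:: 48; 68; 108];
 [:: 48; 69; 109];
 [:: 48; 70; 110];
 [:: 48; 71; 111];
 [:: 49; 64; 105];
 [:: 49; 65; 106];
 [:: 49; 66; 107];
 [:: 49; 67; 108];
 [:: 49; 68; 109];
 [:: 49; 69; 110];
 [:: 49; 70; 111];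
 [:: 49; 71; 104];
 [:: 50; 64; 106];
 [:: 50; 65; 107];
 [:: 50; 66; 108];
 [:: 50; 67; 109];
 [:: 50; 68; 110];
 [:: 50; 69; 111];
 [:: 50; 70; 104];
 [:: 50; 71; 105];
 [:: 51; 64; 107];
 [:: 51; 65; 108];
 [:: 51; 66; 109];
 [:: 51; 67; 110];
 [:: 51; 68; 111];
 [:: 51; 69; 104];
 [:: 51; 70; 105];
 [:: 51; 71; 106];
 [:: 52; 64; 108];
 [:: 52; 65; 109];
 [:: 52; 66; 110];
 [:: 52; 67; 111];
 [:: 52; 68; 104];
 [:: 52; 69; 105];
 [:: 52; 70; 106];
 [:: 52; 71; 107];
 [:: 53; 64; 109];
 [:: 53; 65; 110];
 [:: 53; 66; 111];
 [:: 53; 67; 104];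
 [:: 53; 68; 105];
 [:: 53; 69; 106];
 [:: 53; 70; 107];
 [:: 53; 71; 108];
 [:: 54; 64; 110];
 [:: 54; 65; 111];
 [:: 54; 66; 104];
 [:: 54; 67; 105];
 [:: 54; 68; 106];
 [:: 54; 69; 107];
 [:: 54; 70; 108];
 [:: 54; 71; 109];
 [:: 55; 64; 111];
 [:: 55; 65; 104];
 [:: 55; 66; 105];
 [:: 55; 67; 106];
 [:: 55; 68; 107];
 [:: 55; 69; 108];
 [:: 55; 70; 109];
 [:: 55; 71; 110];
 [:: 48; 72; 96];
 [:: 48; 73; 97];
 [:: 48; 74; 98];
 [:: 48; 75; 99];
 [:: 48; 76; 100];
 [:: 48; 77; 101];
 [:: 48; 78; 102];
 [:: 48; 79; 103];
 [:: 49; 72; 97];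
 [:: 49; 73; 98];
 [:: 49; 74; 99];
 [:: 49; 75; 100];
 [:: 49; 76; 101];
 [:: 49; 77; 102];
 [:: 49; 78; 103];
 [:: 49; 79; 96];
 [:: 50; 72; 98];
 [:: 50; 73; 99];
 [:: 50; 74; 100];
 [:: 50; 75; 101];
 [:: 50; 76; 102];
 [:: 50; 77; 103];
 [:: 50; 78; 96];
 [:: 50; 79; 97];
 [:: 51; 72; 99];
 [:: 51; 73; 100];
 [:: 51; 74; 101];
 [:: 51; 75; 102];
 [:: 51; 76; 103];
 [:: 51; 77; 96];
 [:: 51; 78; 97];
 [:: 51; 79; 98];
 [:: 52; 72; 100];
 [:: 52; 73; 101];
 [:: 52; 74; 102];
 [:: 52; 75; 103];
 [:: 52; 76; 96];
 [:: 52; 77; 97];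
 [:: 52; 78; 98];
 [:: 52; 79; 99];
 [:: 53; 72; 101];
 [:: 53; 73; 102];
 [:: 53; 74; 103];
 [:: 53; 75; 96];
 [:: 53; 76; 97];
 [:: 53; 77; 98];
 [:: 53; 78; 99];
 [:: 53; 79; 100];
 [:: 54; 72; 102];
 [:: 54; 73; 103];
 [:: 54; 74; 96];
 [:: 54; 75; 97];
 [:: 54; 76; 98];
 [:: 54; 77; 99];
 [:: 54; 78; 100];
 [:: 54; 79; 101];
 [:: 55; 72; 103];
 [:: 55; 73; 96];
 [:: 55; 74; 97];
 [:: 55; 75; 98];
 [:: 55; 76; 99];
 [:: 55; 77; 100];
 [:: 55; 78; 101];
 [:: 55; 79; 102];
 [:: 48; 80; 88];
 [:: 48; 81; 89];
 [:: 48; 82; 90];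
 [:: 48; 83; 91];
 [:: 48; 84; 92];
 [:: 48; 85; 93];
 [:: 48; 86; 94];
 [:: 48; 87; 95];
 [:: 49; 80; 89];
 [:: 49; 81; 90];
 [:: 49; 82; 91];
 [:: 49; 83; 92];
 [:: 49; 84; 93];
 [:: 49; 85; 94];
 [:: 49; 86; 95];
 [:: 49; 87; 88];
 [:: 50; 80; 90];
 [:: 50; 81; 91];
 [:: 50; 82; 92];
 [:: 50; 83; 93];
 [:: 50; 84; 94];
 [:: 50; 85; 95];
 [:: 50; 86; 88];
 [:: 50; 87; 89];
 [:: 51; 80; 91];
 [:: 51; 81; 92];
 [:: 51; 82; 93];
 [:: 51; 83; 94];
 [:: 51; 84; 95];
 [:: 51; 85; 88];
 [:: 51; 86; 89];
 [:: 51; 87; 90];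
 [:: 52; 80; 92];
 [:: 52; 81; 93];
 [:: 52; 82; 94];
 [:: 52; 83; 95];
 [:: 52; 84; 88];
 [:: 52; 85; 89];
 [:: 52; 86; 90];
 [:: 52; 87; 91];
 [:: 53; 80; 93];
 [:: 53; 81; 94];
 [:: 53; 82; 95];
 [:: 53; 83; 88];
 [:: 53; 84; 89];
 [:: 53; 85; 90];
 [:: 53; 86; 91];
 [:: 53; 87; 92];
 [:: 54; 80; 94];
 [:: 54; 81; 95];
 [:: 54; 82; 88];
 [:: 54; 83; 89];
 [:: 54; 84; 90];
 [:: 54; 85; 91];
 [:: 54; 86; 92];
 [:: 54; 87; 93];
 [:: 55; 80; 95];
 [:: 55; 81; 88];
 [:: 55; 82; 89];
 [:: 55; 83; 90];
 [:: 55; 84; 91];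
 [:: 55; 85; 92];
 [:: 55; 86; 93];
 [:: 55; 87; 94]].
Definition clsL : seq nat := [:: 0; 1; 3; 7; 0; 0; 0; 0; 1; 1; 1; 0; 1; 1; 1; 1; 2; 2; 2; 2; 2; 2; 2; 2; 3; 3; 3; 3; 3; 0; 3; 3; 4; 4; 4; 4; 4; 4; 4; 4; 5; 5; 5; 5; 5; 5; 5; 5; 6; 6; 6; 6; 6; 6; 6; 6; 7; 0; 7; 7; 7; 7; 7; 7; 8; 8; 8; 8; 8; 8; 8; 8; 9; 9; 9; 9; 9; 9; 9; 9; 10; 10; 10; 10; 10; 10; 10; 10; 11; 11; 11; 11; 11; 11; 11; 11; 12; 12; 12; 12; 12; 12; 12; 12; 13; 13; 13; 13; 13; 13; 13; 13; 14; 14; 14; 14; 14; 14; 14; 14; 15; 15; 15; 15].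
Definition planes : seq (seq nat) := [:: [:: 1; 3; 5; 7; 9; 11; 13]; [:: 0; 3; 4; 7; 8; 11; 12]; [:: 2; 3; 6; 7; 10; 11; 14]; [:: 0; 1; 2; 7; 8; 9; 10]; [:: 1; 4; 6; 7; 9; 12; 14]; [:: 0; 5; 6; 7; 8; 13; 14]; [:: 2; 4; 5; 7; 10; 12; 13]; [:: 0; 1; 2; 3; 4; 5; 6]; [:: 1; 3; 5; 8; 10; 12; 14]; [:: 0; 3; 4; 9; 10; 13; 14]; [:: 2; 3; 6; 8; 9; 12; 13]; [:: 0; 1; 2; 11; 12; 13; 14]; [:: 1; 4; 6; 8; 10; 11; 13]; [:: 0; 5; 6; 9; 10; 11; 12]; [:: 2; 4; 5; 8; 9; 11; 14]].

Definition inY (P : seq nat) (p : nat) := nth 15 clsL p \in 15 :: P.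
Definition R (x : nat) := flatten [seq filter (predC1 x) l | l <- L & x \in l].
Definition wfb := all (fun l => [&& uniq l, all (fun p => p < 124) l & (size l == 3) || (size l == 4)]) L.
Definition pbdb := all (fun x => sort leq (R x) == filter (predC1 x) (iota 0 124)) (iota 0 124).
Definition flatb := all (fun P => all (fun l => (1 < count (inY P) l) ==> all (inY P) l) L && ~~ all (inY P) (iota 0 124)) planes.
Definition U := undup (15 :: clsL).
Definition trib := all (fun i => all (fun j => all (fun k => has (fun P => [&& i \in 15::P, j \in 15 :: P & k \in 15 :: P]) planes) U) U) U.
Definition stepM (C : seq bool) := foldl (fun C l => if 1 < count (nth false C) l then foldl (fun C p => set_nth false C p true) C l else C) C L.
Definition C0 := [:: true; true; true; true].
Definition closb := all (nth false (stepM (stepM C0))) (iota 0 124).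

Lemma wfb_ok : wfb. Proof. by vm_compute. Qed.
Lemma pbdb_ok : pbdb. Proof. by vm_compute. Qed.
Lemma flatb_ok : flatb. Proof. by vm_compute. Qed.
Lemma trib_ok : trib. Proof. by vm_compute. Qed.
Lemma closb_ok : all (nth false (stepM (stepM C0))) (iota 0 124). Proof. by vm_compute. Qed.


Definition to_set (l : seq nat) : {set 'I_124} := [set x : 'I_124 | val x \in l].
Definition blocks : {set {set 'I_124}} := locked [set B : {set 'I_124} | has (fun l => B == to_set l) L].

Lemma in_to_set x l : (x \in to_set l) = (val x \in l).
Proof. by rewrite inE. Qed.

Lemma in_blocks B : B \in blocks -> exists2 l, l \in L & B = to_set l.
Proof. by rewrite /blocks -lock inE => /hasP [l Hl /eqP ->]; exists l. Qed.

Lemma to_set_in l : l \in L -> to_set l \in blocks.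
Proof. by move=> Hl; rewrite /blocks -lock inE; apply/hasP; exists l. Qed.

Lemma wfL l : l \in L -> [&& uniq l, all (fun p => p < 124) l & (size l == 3) || (size l == 4)].
Proof. by move=> Hl; have /allP := wfb_ok; apply. Qed.

Lemma card_to_set l : uniq l -> all (fun p => p < 124) l -> #|to_set l| = size l.
Proof.
move=> ul al.
set s := pmap (@insub nat (fun p => p < 124) 'I_124) l.
have -> : to_set l = [set x in s].
  by apply/setP => x; rewrite !inE mem_pmap_sub.
rewrite cardsE.
have us : uniq s by apply: pmap_sub_uniq.
rewrite (card_uniqP us) size_pmap_sub.
by move: al; rewrite all_count => /eqP.
Qed.

Lemma count_R (Ls : seq (seq nat)) x y : x != y -> all uniq Ls ->
  count (pred1 y) (flatten [seq filter (predC1 x) l | l <- Ls & x \in l]) =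
  count (fun l => (x \in l) && (y \in l)) Ls.
Proof.
move=> Hxy; elim: Ls => //= l Ls IH /andP [ul uLs].
case: (x \in l) => /=; last by rewrite IH.
rewrite count_cat IH //; congr (_ + _).
rewrite count_filter.
have -> : count (predI (pred1 y) (predC1 x)) l = count (pred1 y) l.
  apply: eq_count => z /=; case: eqP => //= ->; by rewrite eq_sym Hxy.
by rewrite count_uniq_mem.
Qed.

Lemma count1_uniq (T : eqType) (p : pred T) s a b :
  count p s = 1 -> a \in s -> b \in s -> p a -> p b -> a = b.
Proof.
elim: s => //= c s IH.
case pc: (p c) => /=.
  move=> [] /eqP; rewrite -leqn0 leqNgt -has_count => /hasPn Hn.
  rewrite !inE => /orP [/eqP -> | ias] /orP [/eqP -> | ibs] pa pb //.
  - by move: (Hn b ibs); rewrite pb.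
  - by move: (Hn a ias); rewrite pa.
  - by move: (Hn a ias); rewrite pa.
rewrite add0n => H.
rewrite !inE => /orP [/eqP ea | ias] /orP [/eqP eb | ibs] pa pb.
- by rewrite ea eb.
- by move: pc; rewrite -ea pa.
- by move: pc; rewrite -eb pb.
- exact: IH.
Qed.

Lemma pbd_count (x y : 'I_124) : x != y ->
  count (fun l => (val x \in l) && (val y \in l)) L = 1.
Proof.
move=> Hxy.
have Hxy' : val x != val y by [].
have uL : all uniq L by apply/allP => l /wfL /and3P [].
rewrite -count_R //.
have Hxi : val x \in iota 0 124 by rewrite mem_iota add0n ltn_ord.
have /eqP Hs := allP pbdb_ok (val x) Hxi.
have Hp : perm_eq (R (val x)) (filter (predC1 (val x)) (iota 0 124)).
  by rewrite -Hs perm_sym perm_sort.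
have HR : R (val x) = flatten [seq filter (predC1 (val x)) l | l <- L & val x \in l] by [].
rewrite -HR (permP Hp) count_uniq_mem.
  by rewrite mem_filter mem_iota add0n ltn_ord andbT /= eq_sym Hxy'.
by rewrite filter_uniq // iota_uniq.
Qed.

Lemma pbd_set (x y : 'I_124) : x != y ->
  exists2 l0, l0 \in L & [set B in blocks | (x \in B) && (y \in B)] = [set to_set l0].
Proof.
move=> Hxy; have Hc := pbd_count Hxy.
have : has (fun l => (val x \in l) && (val y \in l)) L by rewrite has_count Hc.
move=> /hasP [l0 Hl0 /andP [xl yl]].
exists l0 => //; apply/setP => B; rewrite !inE.
apply/idP/idP.
- move=> /andP [/in_blocks [l Hl ->] /andP [Hx Hy]].
  rewrite !in_to_set in Hx Hy.
  apply/eqP; congr to_set.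
  by apply: (count1_uniq Hc) => //=; rewrite ?Hx ?Hy ?xl ?yl.
- move=> /eqP ->; rewrite to_set_in // !in_to_set.
  by rewrite xl yl.
Qed.

Lemma PBD_ok : is_PBD (fun k => (k == 3) || (k == 4)) blocks.
Proof.
split.
- move=> B /in_blocks [l Hl ->].
  have /and3P [ul al sl] := wfL Hl.
  by rewrite card_to_set.
- move=> x y Hxy; have [l0 _ ->] := pbd_set Hxy; exact: cards1.
Qed.

From mathcomp Require Import zify.

Definition Yset (P : seq nat) : {set 'I_124} := [set x : 'I_124 | inY P (val x)].

Lemma count2 (a : pred nat) l p q : p != q -> p \in l -> q \in l -> a p -> a q -> 1 < count a l.
Proof.
move=> Hpq pl ql ap aq.
have H1 : count (predU (pred1 p) (pred1 q)) l <= count a l.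
  by apply: sub_count => z /orP [/eqP -> | /eqP ->].
have H2 := count_predUI (pred1 p) (pred1 q) l.
have H3 : count (predI (pred1 p) (pred1 q)) l = 0.
  apply/eqP; rewrite -leqn0 leqNgt -has_count; apply/hasPn => z _ /=.
  apply/negP => /andP [/eqP zp /eqP zq]; move: Hpq; by rewrite -zp -zq eqxx.
have H4 : 0 < count (pred1 p) l by rewrite -has_count has_pred1.
have H5 : 0 < count (pred1 q) l by rewrite -has_count has_pred1.
lia.
Qed.

Lemma block_in_flat (Y : {set 'I_124}) (x y : 'I_124) l : is_flat blocks Y ->
  x \in Y -> y \in Y -> x != y -> l \in L -> val x \in l -> val y \in l -> to_set l \subset Y.
Proof.
move=> HY xY yY Hxy Hl xl yl.
have /eqP /cards1P [B0 HB0] := HY x y xY yY Hxy.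
have : B0 \in [set B in blocks | [&& B \subset Y, x \in B & y \in B]] by rewrite HB0 set11.
rewrite inE => /andP [B0b /and3P [B0Y xB yB]].
have [l0 _ Hs] := pbd_set Hxy.
have : B0 \in [set B in blocks | (x \in B) && (y \in B)] by rewrite inE B0b xB yB.
have : to_set l \in [set B in blocks | (x \in B) && (y \in B)].
  by rewrite inE to_set_in // ?in_to_set xl yl.
rewrite Hs !inE => /eqP -> /eqP <-; exact: B0Y.
Qed.

Lemma flat_Y P : P \in planes -> is_proper_flat blocks (Yset P).
Proof.
move=> HP; have /andP [Hall Hnot] := allP flatb_ok P HP.
split.
- move=> x y xY yY Hxy.
  have [l0 Hl0 Hs] := pbd_set Hxy.
  have : to_set l0 \in [set B in blocks | (x \in B) && (y \in B)] by rewrite Hs set11.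
  rewrite inE => /andP [_ /andP [xl yl]]; rewrite ?in_to_set in xl yl.
  have /and3P [ul _ _] := wfL Hl0.
  rewrite inE in xY; rewrite inE in yY.
  have Hsub : all (inY P) l0.
    apply: (implyP (allP Hall l0 Hl0)); exact: (count2 (p := val x) (q := val y)).
  rewrite (_ : [set B in blocks | [&& B \subset Yset P, x \in B & y \in B]] = [set to_set l0]) ?cards1 //.
  apply/setP => B; rewrite !inE; apply/idP/idP.
  + move=> /andP [Bb /and3P [_ xB yB]].
    have : B \in [set B in blocks | (x \in B) && (y \in B)] by rewrite inE Bb xB yB.
    by rewrite Hs inE.
  + move=> /eqP ->; rewrite to_set_in //=; apply/and3P; split.
    * apply/subsetP => z; rewrite !inE => zl; exact: (allP Hsub _ zl).
    * by rewrite in_to_set.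
    * by rewrite in_to_set.
- apply/negP => /eqP HT.
  move: Hnot => /allPn [p pI npY].
  have pl : p < 124 by move: pI; rewrite mem_iota add0n.
  have H : Ordinal pl \in Yset P by rewrite HT inE.
  by move: H; rewrite inE (negbTE npY).
Qed.

Lemma three_sets : all_sets_in_proper_flat blocks 3.
Proof.
move=> S; rewrite cardE.
have Hmem : forall x, (x \in S) = (x \in enum S) by move=> x; rewrite mem_enum.
have inU : forall z : 'I_124, nth 15 clsL z \in U.
  move=> z; rewrite /U mem_undup inE; case: (ltnP z (size clsL)) => h.
    by rewrite mem_nth ?orbT.
  by rewrite nth_default ?eqxx.
case E: (enum S) => [|a [|b [|c [|]]]] // _.
have := allP trib_ok _ (inU a) => /allP /(_ _ (inU b)) /allP /(_ _ (inU c)) /hasP [P HP /and3P [ha hb hc]].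
exists (Yset P); split; first exact: flat_Y.
apply/subsetP => z; rewrite Hmem E !inE => /or3P [] /eqP -> //.
Qed.

Lemma card_lt d : d <= 124 -> #|[set x : 'I_124 | val x < d]| = d.
Proof.
move=> hd.
have -> : [set x : 'I_124 | val x < d] = widen_ord hd @: [set: 'I_d].
  apply/setP => x; rewrite inE; apply/idP/imsetP.
  - by move=> xd; exists (Ordinal xd) => //; apply: val_inj.
  - by move=> [y _ ->] /=.
rewrite card_imset ?cardsT ?card_ord //.
by move=> a b /(congr1 val) /= /val_inj.
Qed.

Definition inv (Y : {set 'I_124}) (C : seq bool) :=
  forall p, nth false C p -> exists2 x : 'I_124, val x = p & x \in Y.

Lemma inner_fold (Y : {set 'I_124}) (C : seq bool) (l' : seq nat) : (forall p, p \in l' -> exists2 x : 'I_124, val x = p & x \in Y) ->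
  inv Y C -> inv Y (foldl (fun C p => set_nth false C p true) C l').
Proof.
elim: l' C => //= p l' IH C Hl HC; apply: IH.
  by move=> q ql; apply: Hl; rewrite inE ql orbT.
move=> q; rewrite nth_set_nth /=; case: eqP => [-> _ | _].
  by apply: Hl; rewrite inE eqxx.
exact: HC.
Qed.

Lemma two_of (a : pred nat) l : uniq l -> 1 < count a l ->
  exists p q, [/\ p != q, p \in l, q \in l, a p & a q].
Proof.
move=> ul; rewrite -size_filter.
have uf : uniq (filter a l) by apply: filter_uniq.
have mf : forall z, z \in filter a l -> (z \in l) && a z by move=> z; rewrite mem_filter andbC.
move: uf mf; case: (filter a l) => [|p [|q s]] //= /andP [npq _] mf _.
have /andP [pl ap] := mf p (mem_head _ _).
have /andP [ql aq] : (q \in l) && a q by apply: mf; rewrite !inE eqxx orbT.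
exists p, q; split => //.
by apply: contraNneq npq => ->; rewrite mem_head.
Qed.

Lemma outer_fold (Y : {set 'I_124}) (C : seq bool) (Ls : seq (seq nat)) : is_flat blocks Y -> {subset Ls <= L} -> inv Y C ->
  inv Y (foldl (fun C l => if 1 < count (nth false C) l
                           then foldl (fun C p => set_nth false C p true) C l else C) C Ls).
Proof.
move=> HY; elim: Ls C => //= l Ls IH C Hs HC.
apply: IH; first by move=> z zL; apply: Hs; rewrite inE zL orbT.
case: ifP => // Hc.
have Hl : l \in L by apply: Hs; exact: mem_head.
have /and3P [ul al _] := wfL Hl.
have [p [q [npq pl ql ap aq]]] := two_of ul Hc.
have [x vx xY] := HC p ap.
have [y vy yY] := HC q aq.
have Hxy : x != y by apply: contra npq => /eqP exy; rewrite -vx -vy exy.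
have Hsub := block_in_flat HY xY yY Hxy Hl (etrans (congr1 (fun z => z \in l) vx) pl) (etrans (congr1 (fun z => z \in l) vy) ql).
apply: inner_fold => // r rl.
have rlt : r < 124 := allP al r rl.
exists (Ordinal rlt) => //; apply: (subsetP Hsub); by rewrite in_to_set.
Qed.

Lemma stepM_inv (Y : {set 'I_124}) (C : seq bool) : is_flat blocks Y -> inv Y C -> inv Y (stepM C).
Proof. by move=> HY HC; apply: outer_fold. Qed.

Lemma closure_full (Y : {set 'I_124}) : is_flat blocks Y -> (forall x : 'I_124, val x < 4 -> x \in Y) -> Y = setT.
Proof.
move=> HY H4.
have H0 : inv Y C0.
  move=> p Hp.
  have plt : p < 4 by rewrite ltnNge; apply/negP => hp; move: Hp; rewrite nth_default.
  have plt' : p < 124 by apply: leq_trans plt _.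
  by exists (Ordinal plt') => //; apply: H4.
have Hit : inv Y (stepM (stepM C0)) := stepM_inv HY (stepM_inv HY H0).
apply/setP => x; rewrite inE.
have Hx : val x \in iota 0 124 by rewrite mem_iota add0n ltn_ord.
have Hc : nth false (stepM (stepM C0)) (val x) := allP closb_ok (val x) Hx.
have [x' vx' x'Y] := Hit _ Hc.
by have -> : x = x' by apply: val_inj.
Qed.

Lemma dim3 : has_dimension blocks 3.
Proof.
split => //; split; first exact: three_sets.
move=> d hd Hall; rewrite leqNgt; apply/negP => h4.
have [Y [[HY Hne] HS]] := Hall _ (card_lt hd).
move/eqP: Hne; apply; apply: closure_full => // x x4.
by apply: (subsetP HS); rewrite inE (leq_trans x4 h4).
Qed.

Theorem proposition3p3 :
  exists blocks : {set {set 'I_124}},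
    is_PBD (fun k => (k == 3) || (k == 4)) blocks /\ has_dimension blocks 3.
Proof. by exists blocks; split; [exact: PBD_ok | exact: dim3]. Qed.
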